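(* For each $2p\in\{90, 126, 198, 234, 306, 342\}$ there exists a cyclic DCA$(4,2p+1;2p)$ satisfying P1 and P2.
   Context: A difference covering array DCA$(k,\eta;n)$ over $\mathbb{Z}_n$ (a cyclic DCA) is an $\eta\times k$ matrix $Q=[q(i,j)]$ with entries in $\mathbb{Z}_n$ such that for every pair of distinct columns $j,j'$ the multiset $\{q(i,j)-q(i,j') : 0\le i\le \eta-1\}$ contains every element of $\mathbb{Z}_n$ at least once. A DCA$(k,n+1;n)$ is taken in normalized form: all entries of its last row (row $n$) and last column (column $k-1$) equal $0$. It satisfies P1 if $0$ occurs at least twice in every column, and P2 if for all distinct columns $j,j'$ with $j\neq k-1\neq j'$, the set $\{q(i,j)-q(i,j') : 0\le i\le n-1\}$ equals $\mathbb{Z}_n\setminus\{0\}$. *)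

(* Defs.v *)
From HB Require Import structures.
From mathcomp Require Import all_boot all_order all_algebra.
Set Implicit Arguments. Unset Strict Implicit. Unset Printing Implicit Defensive.
Import GRing.Theory.
Local Open Scope ring_scope.

(* A difference covering array DCA(k, eta; n) over Z_n: an eta x k matrix
   with entries in 'Z_n (n >= 2 assumed by callers) such that for all
   distinct columns j, j' every element of Z_n occurs among q(i,j)-q(i,j'). *)
Definition is_DCA (n eta k : nat) (Q : 'M['Z_n]_(eta, k)) : Prop :=
  forall j j' : 'I_k, j != j' ->
    forall x : 'Z_n, exists i : 'I_eta, Q i j - Q i j' = x.

Definition DCA_normalized (n k : nat) (Q : 'M['Z_n]_(n.+1, k.+1)) : Prop :=
  (forall j, Q ord_max j = 0) /\ (forall i, Q i ord_max = 0).

Definition DCA_P1 (n k : nat) (Q : 'M['Z_n]_(n.+1, k.+1)) : Prop :=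
  forall j, (2 <= #|[set i | Q i j == 0%R]|)%N.

Definition DCA_P2 (n k : nat) (Q : 'M['Z_n]_(n.+1, k.+1)) : Prop :=
  forall j j' : 'I_k.+1, j != j' -> j != ord_max -> j' != ord_max ->
    [set Q i j - Q i j' | i in [set i : 'I_n.+1 | i != ord_max]]
      = [set x : 'Z_n | x != 0%R].

(* Main.v *)
Require Import Defs.
From HB Require Import structures.
From mathcomp Require Import all_boot all_order all_algebra.
Set Implicit Arguments. Unset Strict Implicit. Unset Printing Implicit Defensive.
Import GRing.Theory.

Section Gen.
Variable m : nat.
Local Notation n := m.+2.
Variable L : seq (seq nat).

Definition vv (j i : nat) : nat := if j < 3 then nth 0 (nth [::] L j) i else 0.
Variable W : seq (seq nat).
Definition df (j j' i : nat) : nat := (vv j i + (n - vv j' i)) %% n.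

Definition goodb : bool :=
  all (fun j => let c := nth [::] L j in let w := nth [::] W j in
        [&& size c == n, all (fun x => x < n) c &
            all (fun y => (nth 0 w y < n) && (vv j (nth 0 w y) == y)) (iota 0 n)])
      (iota 0 3) &&
  all (fun j => all (fun j' => (j == j') ||
        (all (fun i => df j j' i != 0) (iota 0 n) &&
         all (fun y => let w := nth [::] W (3 + 3 * j + j') in
               (nth 0 w y < n) && (df j j' (nth 0 w y) == y)) (iota 1 n.-1))) (iota 0 3))
      (iota 0 3).

Hypothesis good : goodb.

Definition QQ : 'M['Z_n]_(n.+1, 4) := \matrix_(i, j) inZp (vv j i).

Lemma col_ok j : j < 3 -> let c := nth [::] L j in let w := nth [::] W j in
        [&& size c == n, all (fun x => x < n) c &
            all (fun y => (nth 0 w y < n) && (vv j (nth 0 w y) == y)) (iota 0 n)].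
Proof.
move=> Hj; case/andP: good => /allP H _; apply: H; by rewrite mem_iota.
Qed.

Lemma pair_ok j j' : j < 3 -> j' < 3 -> j != j' ->
        (all (fun i => df j j' i != 0) (iota 0 n) &&
         all (fun y => let w := nth [::] W (3 + 3 * j + j') in
               (nth 0 w y < n) && (df j j' (nth 0 w y) == y)) (iota 1 n.-1)).
Proof.
move=> Hj Hj' Hne; case/andP: good => _ /allP H.
have Hj3 : j \in iota 0 3 by rewrite mem_iota.
have Hj3' : j' \in iota 0 3 by rewrite mem_iota.
move/allP: (H j Hj3) => H2; have := H2 j' Hj3'.
by rewrite (negPf Hne).
Qed.

Lemma vv_lt j i : vv j i < n.
Proof.
rewrite /vv; case: (ltnP j 3) => Hj //.
case/and3P: (col_ok Hj) => /eqP Hs /allP Ha _.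
case: (ltnP i n) => Hi; first by apply: Ha; apply: mem_nth; rewrite Hs.
by rewrite nth_default // Hs.
Qed.

Lemma vv_n j : vv j n = 0.
Proof.
rewrite /vv; case: (ltnP j 3) => Hj //.
case/and3P: (col_ok Hj) => /eqP Hs _ _.
by rewrite nth_default // Hs.
Qed.

Lemma QQE i (j : 'I_4) : val (QQ i j) = vv j i.
Proof. by rewrite mxE /= modn_small // vv_lt. Qed.

Lemma QQ_sub i (j j' : 'I_4) :
  val (QQ i j - QQ i j')%R = (vv j i + (n - vv j' i)) %% n.
Proof. by rewrite /= modnDmr !QQE. Qed.

Lemma col_cover (j : 'I_4) (y : 'Z_n) : j < 3 -> exists i : 'I_n, QQ (widen_ord (leqnSn n) i) j = y.
Proof.
move=> Hj; case/and3P: (col_ok Hj) => _ _ /allP Hc.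
have Hm : val y \in iota 0 n by rewrite mem_iota /=; exact: ltn_ord y.
have /andP [Hi /eqP Ey] := Hc (val y) Hm.
exists (Ordinal Hi); apply: val_inj; by rewrite QQE.
Qed.

Lemma diff_nz (j j' : 'I_4) (i : 'I_n.+1) : j < 3 -> j' < 3 -> j != j' -> i != ord_max ->
  (QQ i j - QQ i j' != 0)%R.
Proof.
move=> Hj Hj' Hne Hi.
have Hil : i < n by move: (ltn_ord i) Hi; rewrite ltnS leq_eqVlt => /orP [/eqP E|] //; rewrite -(inj_eq val_inj) /= E eqxx.
case/andP: (pair_ok Hj Hj' Hne) => /allP H0 _.
have Hm : val i \in iota 0 n by rewrite mem_iota.
have := H0 (val i) Hm.
apply: contra => /eqP E; apply/eqP; by rewrite /df -QQ_sub E.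
Qed.

Lemma diff_cover (j j' : 'I_4) (y : 'Z_n) : j < 3 -> j' < 3 -> j != j' -> (y != 0)%R ->
  exists i : 'I_n, (QQ (widen_ord (leqnSn n) i) j - QQ (widen_ord (leqnSn n) i) j' = y)%R.
Proof.
move=> Hj Hj' Hne Hy.
case/andP: (pair_ok Hj Hj' Hne) => _ /allP H.
have Hy0 : val y != 0 by [].
have Hm : val y \in iota 1 n.-1 by rewrite mem_iota lt0n Hy0 /=; exact: ltn_ord y.
have /andP [Hi /eqP Ey] := H (val y) Hm.
exists (Ordinal Hi); apply: val_inj; rewrite QQ_sub; exact: Ey.
Qed.

Lemma lt_max k (j : 'I_k.+1) : j != ord_max -> j < k.
Proof.
move=> H; have := ltn_ord j; rewrite ltnS leq_eqVlt => /orP [/eqP E|//].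
by move: H; rewrite -(inj_eq val_inj) /= E eqxx.
Qed.

Lemma widen_neq (i : 'I_n) : widen_ord (leqnSn n) i != ord_max.
Proof. by rewrite -(inj_eq val_inj) /= neq_ltn ltn_ord. Qed.

Lemma QQ3 i (j : 'I_4) : ~~ (j < 3) -> QQ i j = 0%R.
Proof. by move=> Hj; apply: val_inj; rewrite QQE /vv (negPf Hj). Qed.

Lemma QQmax (j : 'I_4) : QQ ord_max j = 0%R.
Proof. by apply: val_inj; rewrite QQE vv_n. Qed.

Lemma gen_main : is_DCA QQ /\ DCA_normalized QQ /\ DCA_P1 QQ /\ DCA_P2 QQ.
Proof.
split; [|split; [|split]].
- move=> j j' Hne x.
  case: (boolP (j < 3)) => Hj; case: (boolP (j' < 3)) => Hj'.
  + case: (eqVneq x 0%R) => [->|Hx].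
      by exists ord_max; rewrite !QQmax subrr.
    by case: (diff_cover Hj Hj' Hne Hx) => i Hi; exists (widen_ord (leqnSn n) i).
  + case: (col_cover x Hj) => i Hi; exists (widen_ord (leqnSn n) i).
    by rewrite (QQ3 _ Hj') subr0.
  + case: (col_cover (- x)%R Hj') => i Hi; exists (widen_ord (leqnSn n) i).
    by rewrite (QQ3 _ Hj) Hi sub0r opprK.
  + exfalso; move: Hne; rewrite -(inj_eq val_inj) /=.
    have := ltn_ord j; have := ltn_ord j'.
    by move: Hj Hj'; rewrite -!leqNgt => Hj Hj'; rewrite !ltnS => H1 H2;
      rewrite (@anti_leq j 3) ?Hj ?H2 // (@anti_leq j' 3) ?Hj' ?H1.
- split; first exact: QQmax.
  by move=> i; apply: QQ3.
- move=> j; apply/card_gt1P.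
  case: (boolP (j < 3)) => Hj.
    case: (col_cover 0%R Hj) => i Hi.
    exists (widen_ord (leqnSn n) i), ord_max; rewrite !inE Hi QQmax eqxx; split=> //.
    exact: widen_neq.
  exists ord0, ord_max; rewrite !inE !QQ3 // eqxx; split=> //.
- move=> j j' Hne Hj Hj'; have Hj3 := lt_max Hj; have Hj3' := lt_max Hj'.
  apply/setP => x; rewrite [in RHS]inE; apply/idP/idP.
    case/imsetP => i; rewrite inE => Hi ->; exact: diff_nz.
  move=> Hx; case: (diff_cover Hj3 Hj3' Hne Hx) => i Hi.
  apply/imsetP; exists (widen_ord (leqnSn n) i); last by rewrite Hi.
  by rewrite inE widen_neq.
Qed.

End Gen.

Lemma gen_ex m L W : goodb m L W -> exists Q : 'M['Z_(m.+2)]_((m.+2).+1, 4),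
  is_DCA Q /\ DCA_normalized Q /\ DCA_P1 Q /\ DCA_P2 Q.
Proof. by move=> H; exists (QQ m L); apply: (gen_main (W := W)). Qed.


Definition L90 : seq (seq nat) := [:: [:: 65; 60; 50; 75; 70; 0; 85; 15; 35; 80; 10; 5; 55; 20; 30; 25; 40; 45; 1; 19; 78; 42; 12; 48; 84; 66; 64; 46; 8; 62; 23; 77; 31; 49; 9; 81; 33; 87; 71; 89; 4; 76; 29; 11; 74; 56; 32; 68; 51; 69; 67; 13; 18; 72; 7; 43; 57; 3; 24; 6; 28; 82; 21; 39; 41; 59; 61; 79; 63; 27; 83; 47; 14; 86; 26; 44; 52; 88; 34; 16; 38; 2; 58; 22; 54; 36; 37; 73; 53; 17]; [:: 20; 65; 70; 50; 35; 25; 30; 60; 45; 75; 40; 85; 5; 0; 80; 10; 55; 15; 64; 46; 69; 51; 81; 9; 6; 24; 27; 63; 7; 43; 1; 19; 38; 2; 76; 4; 26; 44; 3; 57; 18; 72; 78; 42; 68; 32; 58; 22; 74; 56; 33; 87; 47; 83; 23; 77; 61; 79; 16; 34; 17; 53; 62; 8; 39; 21; 49; 31; 84; 66; 12; 48; 86; 14; 88; 52; 54; 36; 67; 13; 41; 59; 82; 28; 37; 73; 11; 29; 89; 71]; [:: 15; 80; 40; 85; 75; 45; 20; 0; 50; 35; 5; 60; 30; 70; 65; 55; 10; 25; 37; 73; 76; 4; 39; 21; 62; 8; 43; 7; 66; 84; 72; 18; 59; 41; 3; 57; 49; 31; 67; 13; 16; 34; 32; 68; 46; 64; 51; 69; 33;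 87; 24; 6; 71; 89; 36; 54; 44; 26; 12; 48; 9; 81; 23; 77; 27; 63; 38; 2; 52; 88; 74; 56; 53; 17; 82; 28; 58; 22; 78; 42; 79; 61; 11; 29; 1; 19; 83; 47; 86; 14]].
Definition W90 : seq (seq nat) := [:: [:: 5; 18; 81; 57; 40; 11; 59; 54; 28; 34; 10; 43; 22; 51; 72; 7; 79; 89; 52; 19; 13; 62; 83; 30; 58; 15; 74; 69; 60; 42; 14; 32; 46; 36; 78; 8; 85; 86; 80; 63; 16; 64; 21; 55; 75; 17; 27; 71; 23; 33; 2; 48; 76; 88; 84; 12; 45; 56; 82; 65; 1; 66; 29; 68; 26; 0; 25; 50; 47; 49; 4; 38; 53; 87; 44; 3; 41; 31; 20; 67; 9; 35; 61; 70; 24; 6; 73; 37; 77; 39]; [:: 13; 30; 33; 38; 35; 12; 24; 28; 63; 23; 15; 86; 70; 79; 73; 17; 58; 60; 40; 31; 0; 65; 47; 54; 25; 5; 36; 26; 83; 87; 6; 67; 45; 50; 59; 4; 77; 84; 32; 64; 10; 80; 43; 29; 37; 8; 19; 52; 71; 66; 3; 21; 75; 61; 76; 16; 49; 39; 46; 81; 7; 56; 62; 27; 18; 1; 69; 78; 44; 20; 2; 89; 41; 85; 48; 9; 34; 55; 42; 57; 14; 22; 82; 53; 68; 11; 72; 51; 74; 88]; [:: 7; 84; 67; 34; 21; 10; 51; 27; 25; 60; 16; 82; 58; 39; 89; 0; 40; 73; 31; 85; 6; 23; 77; 62; 50; 17; 57; 64; 75; 83; 12; 37; 42; 48; 41;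 9; 54; 18; 66; 22; 2; 33; 79; 26; 56; 5; 44; 87; 59; 36; 8; 46; 68; 72; 55; 15; 71; 35; 76; 32; 11; 81; 24; 65; 45; 14; 28; 38; 43; 47; 13; 52; 30; 19; 70; 4; 20; 63; 78; 80; 1; 61; 74; 86; 29; 3; 88; 49; 69; 53]; [:: 0; 0; 0; 0; 0; 0; 0; 0; 0; 0; 0; 0; 0; 0; 0; 0; 0; 0; 0; 0; 0; 0; 0; 0; 0; 0; 0; 0; 0; 0; 0; 0; 0; 0; 0; 0; 0; 0; 0; 0; 0; 0; 0; 0; 0; 0; 0; 0; 0; 0; 0; 0; 0; 0; 0; 0; 0; 0; 0; 0; 0; 0; 0; 0; 0; 0; 0; 0; 0; 0; 0; 0; 0; 0; 0; 0; 0; 0; 0; 0; 0; 0; 0; 0; 0; 0; 0; 0; 0; 0]; [:: 0; 28; 64; 79; 41; 9; 44; 36; 58; 20; 11; 60; 66; 49; 57; 15; 51; 84; 72; 29; 13; 22; 30; 34; 45; 3; 86; 18; 74; 61; 17; 63; 39; 81; 50; 4; 89; 26; 65; 23; 14; 42; 25; 37; 87; 7; 47; 33; 67; 62; 12; 69; 77; 85; 88; 6; 55; 78; 31; 43; 10; 52; 59; 19; 46; 5; 82; 48; 38; 68; 2; 70; 73; 27; 54; 16; 40; 35; 24; 53; 8; 21; 75; 32; 83; 1; 56; 80; 76; 71]; [:: 0; 61; 20; 89; 38; 10; 34; 51; 33; 70; 2; 68; 58; 56; 64; 7; 75; 85; 48; 60; 17; 26; 24; 66; 35; 12; 87; 23;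 44; 69; 16; 81; 28; 43; 74; 11; 19; 52; 21; 27; 13; 30; 41; 50; 86; 9; 78; 82; 59; 80; 0; 72; 63; 84; 18; 14; 37; 88; 25; 31; 15; 54; 32; 22; 79; 6; 77; 57; 29; 73; 1; 46; 49; 53; 36; 8; 39; 67; 40; 55; 3; 71; 45; 83; 76; 4; 65; 42; 62; 47]; [:: 0; 71; 76; 80; 56; 1; 83; 32; 75; 21; 8; 53; 24; 35; 40; 16; 54; 27; 73; 70; 2; 68; 38; 48; 82; 5; 46; 19; 59; 52; 10; 43; 31; 78; 55; 6; 88; 85; 77; 69; 12; 62; 67; 33; 47; 7; 87; 37; 25; 42; 14; 23; 65; 26; 89; 4; 50; 81; 39; 63; 17; 61; 74; 18; 86; 3; 45; 34; 30; 22; 13; 29; 72; 84; 51; 15; 57; 49; 66; 60; 11; 20; 58; 36; 44; 9; 41; 79; 64; 28]; [:: 0; 0; 0; 0; 0; 0; 0; 0; 0; 0; 0; 0; 0; 0; 0; 0; 0; 0; 0; 0; 0; 0; 0; 0; 0; 0; 0; 0; 0; 0; 0; 0; 0; 0; 0; 0; 0; 0; 0; 0; 0; 0; 0; 0; 0; 0; 0; 0; 0; 0; 0; 0; 0; 0; 0; 0; 0; 0; 0; 0; 0; 0; 0; 0; 0; 0; 0; 0; 0; 0; 0; 0; 0; 0; 0; 0; 0; 0; 0; 0; 0; 0; 0; 0; 0; 0; 0; 0; 0; 0]; [:: 0; 31; 40; 88; 58; 0; 74; 46; 60; 50; 6; 66; 64; 37; 77; 14; 25; 56; 86; 30; 13;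 63; 44; 55; 75; 11; 38; 18; 70; 67; 2; 28; 68; 72; 24; 10; 84; 35; 41; 62; 9; 48; 22; 47; 39; 16; 42; 21; 65; 29; 4; 33; 80; 57; 85; 3; 27; 89; 45; 49; 7; 79; 61; 19; 43; 12; 52; 36; 69; 32; 5; 82; 87; 34; 26; 1; 59; 54; 23; 78; 17; 51; 71; 20; 53; 8; 76; 73; 81; 83]; [:: 0; 47; 62; 42; 65; 4; 76; 83; 45; 71; 3; 55; 40; 67; 39; 8; 36; 53; 49; 46; 1; 73; 29; 57; 77; 6; 79; 22; 32; 54; 15; 31; 25; 88; 37; 14; 18; 84; 63; 72; 0; 80; 59; 82; 78; 9; 86; 50; 41; 30; 13; 27; 21; 52; 19; 11; 74; 43; 28; 81; 16; 69; 44; 23; 87; 12; 35; 66; 24; 26; 17; 60; 48; 85; 75; 7; 64; 56; 58; 68; 2; 70; 33; 51; 34; 10; 38; 89; 20; 61]; [:: 0; 83; 81; 73; 76; 8; 53; 20; 71; 51; 17; 78; 23; 54; 59; 1; 26; 34; 87; 82; 5; 32; 69; 36; 52; 12; 43; 19; 61; 79; 7; 49; 45; 89; 27; 3; 85; 57; 80; 33; 4; 29; 65; 21; 42; 16; 39; 47; 22; 48; 9; 62; 41; 35; 84; 10; 24; 72; 68; 28; 2; 67; 70; 18; 38; 11; 75; 55; 44; 63; 13; 30; 86; 56; 25; 14; 77; 37; 64; 66; 6; 50; 60; 46; 74; 0; 58; 88; 40; 31]; [:: 0; 0; 0; 0; 0; 0; 0; 0; 0; 0; 0; 0; 0; 0;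 0; 0; 0; 0; 0; 0; 0; 0; 0; 0; 0; 0; 0; 0; 0; 0; 0; 0; 0; 0; 0; 0; 0; 0; 0; 0; 0; 0; 0; 0; 0; 0; 0; 0; 0; 0; 0; 0; 0; 0; 0; 0; 0; 0; 0; 0; 0; 0; 0; 0; 0; 0; 0; 0; 0; 0; 0; 0; 0; 0; 0; 0; 0; 0; 0; 0; 0; 0; 0; 0; 0; 0; 0; 0; 0; 0]].
Lemma good90 : goodb 88 L90 W90. Proof. vm_compute. reflexivity. Qed.
Definition L126 : seq (seq nat) := [:: [:: 119; 42; 14; 21; 70; 0; 49; 105; 35; 98; 28; 77; 91; 56; 84; 7; 112; 63; 29; 65; 11; 97; 61; 115; 10; 118; 82; 121; 67; 85; 47; 101; 83; 68; 122; 104; 44; 116; 8; 55; 19; 73; 106; 16; 88; 87; 69; 33; 80; 62; 26; 15; 51; 123; 94; 76; 40; 52; 34; 124; 99; 9; 81; 110; 38; 20; 53; 71; 107; 96; 24; 6; 3; 111; 75; 58; 4; 22; 36; 72; 18; 48; 12; 66; 92; 2; 74; 50; 86; 32; 125; 89; 17; 93; 39; 57; 103; 31; 13; 120; 30; 102; 108; 90; 54; 79; 25; 43; 64; 100; 46; 114; 60; 78; 45; 27; 117; 109; 1; 37; 23; 95; 113; 41; 5; 59]; [:: 56; 119; 70; 14; 35; 7; 84; 42; 63; 21; 112; 49; 77; 0; 98; 28; 91; 105; 20; 110; 38; 74; 92; 2; 61; 115; 97; 53; 71; 107; 30; 102; 120; 118; 82; 10; 6; 96; 24; 16; 88; 106;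 95; 113; 23; 69; 33; 87; 109; 1; 37; 34; 124; 52; 64; 100; 46; 44; 116; 8; 80; 62; 26; 4; 22; 58; 79; 25; 43; 83; 47; 101; 81; 99; 9; 94; 76; 40; 103; 31; 13; 11; 29; 65; 104; 68; 122; 5; 59; 41; 123; 15; 51; 60; 78; 114; 36; 72; 18; 86; 32; 50; 57; 93; 39; 17; 125; 89; 111; 75; 3; 90; 54; 108; 85; 121; 67; 117; 45; 27; 48; 12; 66; 19; 73; 55]; [:: 105; 98; 112; 49; 21; 63; 56; 0; 14; 35; 77; 42; 84; 70; 119; 91; 28; 7; 109; 1; 37; 16; 88; 106; 6; 96; 24; 76; 40; 94; 97; 61; 115; 85; 121; 67; 66; 48; 12; 19; 73; 55; 108; 90; 54; 102; 120; 30; 92; 2; 74; 39; 57; 93; 75; 3; 111; 8; 44; 116; 89; 17; 125; 22; 58; 4; 122; 104; 68; 72; 18; 36; 78; 114; 60; 15; 51; 123; 65; 11; 29; 43; 79; 25; 80; 62; 26; 69; 33; 87; 45; 27; 117; 64; 100; 46; 20; 110; 38; 34; 124; 52; 13; 103; 31; 113; 23; 95; 101; 83; 47; 81; 99; 9; 32; 50; 86; 71; 107; 53; 82; 10; 118; 59; 41; 5]].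
Definition W126 : seq (seq nat) := [:: [:: 5; 118; 85; 72; 76; 124; 71; 15; 38; 61; 24; 20; 82; 98; 2; 51; 43; 92; 80; 40; 65; 3; 77; 120; 70; 106; 50; 115; 10; 18; 100; 97; 89; 47; 58; 8; 78; 119; 64; 94; 56; 123; 1; 107; 36; 114; 110; 30; 81; 6; 87; 52; 57; 66; 104; 39; 13; 95; 75; 125; 112; 22; 49; 17; 108; 19; 83; 28; 33; 46; 4; 67; 79; 41; 86; 74; 55; 11; 113; 105; 48; 62; 26; 32; 14; 29; 88; 45; 44; 91; 103; 12; 84; 93; 54; 121; 69; 21; 9; 60; 109; 31; 101; 96; 35; 7; 42; 68; 102; 117; 63; 73; 16; 122; 111; 23; 37; 116; 25; 0; 99; 27; 34; 53; 59; 90]; [:: 13; 49; 23; 110; 63; 87; 36; 5; 59; 74; 35; 81; 121; 80; 3; 91; 39; 105; 98; 123; 18; 9; 64; 44; 38; 67; 62; 119; 15; 82; 30; 79; 100; 46; 51; 4; 96; 50; 20; 104; 77; 89; 7; 68; 57; 118; 56; 70; 120; 11; 101; 92; 53; 27; 112; 125; 0; 102; 65; 88; 93; 24; 61; 8; 54; 83; 122; 116; 85; 45; 2; 28; 97; 124; 21; 109; 76; 12; 94; 66; 60; 72; 34; 69; 6; 114; 99; 47; 40; 107; 111; 16; 22; 103; 75; 42; 37; 26; 14; 73; 55; 71; 31; 78; 84; 17; 41; 29; 113; 48; 19; 108; 10; 43; 95; 25; 58; 117; 33; 1; 32; 115; 86; 90; 52; 106]; [:: 7; 19; 49; 55; 65;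 125; 24; 17; 57; 113; 121; 79; 38; 102; 8; 75; 21; 61; 70; 39; 96; 4; 63; 106; 26; 83; 86; 91; 16; 80; 47; 104; 114; 88; 99; 9; 71; 20; 98; 51; 28; 124; 11; 81; 58; 90; 95; 110; 37; 3; 115; 76; 101; 119; 44; 41; 6; 52; 64; 123; 74; 31; 85; 5; 93; 78; 36; 35; 68; 87; 13; 117; 69; 40; 50; 54; 27; 10; 72; 82; 84; 111; 120; 109; 12; 33; 116; 89; 22; 60; 43; 15; 48; 53; 29; 107; 25; 30; 1; 112; 94; 108; 45; 103; 67; 0; 23; 118; 42; 18; 97; 56; 2; 105; 73; 32; 59; 92; 122; 14; 46; 34; 66; 77; 100; 62]; [:: 0; 0; 0; 0; 0; 0; 0; 0; 0; 0; 0; 0; 0; 0; 0; 0; 0; 0; 0; 0; 0; 0; 0; 0; 0; 0; 0; 0; 0; 0; 0; 0; 0; 0; 0; 0; 0; 0; 0; 0; 0; 0; 0; 0; 0; 0; 0; 0; 0; 0; 0; 0; 0; 0; 0; 0; 0; 0; 0; 0; 0; 0; 0; 0; 0; 0; 0; 0; 0; 0; 0; 0; 0; 0; 0; 0; 0; 0; 0; 0; 0; 0; 0; 0; 0; 0; 0; 0; 0; 0; 0; 0; 0; 0; 0; 0; 0; 0; 0; 0; 0; 0; 0; 0; 0; 0; 0; 0; 0; 0; 0; 0; 0; 0; 0; 0; 0; 0; 0; 0; 0; 0; 0; 0; 0; 0]; [:: 0; 83; 90; 25; 125; 80; 112; 3; 57; 18; 119; 42; 73; 69; 12; 104; 64;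 30; 45; 60; 37; 16; 123; 21; 111; 109; 106; 88; 11; 43; 54; 71; 115; 93; 99; 4; 46; 81; 36; 39; 34; 79; 10; 110; 58; 87; 67; 122; 72; 1; 116; 102; 101; 52; 76; 62; 13; 40; 124; 78; 85; 49; 105; 7; 68; 44; 74; 96; 27; 95; 2; 53; 47; 61; 91; 24; 33; 9; 86; 108; 107; 19; 118; 121; 17; 97; 114; 94; 65; 32; 75; 6; 92; 41; 35; 22; 113; 48; 8; 20; 66; 120; 55; 70; 29; 15; 63; 51; 77; 82; 38; 26; 14; 23; 84; 50; 59; 89; 117; 5; 56; 98; 28; 103; 100; 31]; [:: 0; 34; 106; 47; 24; 81; 70; 12; 59; 23; 60; 95; 84; 114; 0; 74; 65; 109; 41; 54; 118; 8; 25; 104; 69; 77; 92; 28; 2; 93; 53; 116; 100; 111; 44; 11; 39; 35; 117; 68; 31; 83; 15; 75; 57; 27; 18; 97; 86; 4; 101; 72; 43; 88; 125; 56; 17; 66; 26; 82; 49; 79; 91; 9; 19; 94; 85; 120; 37; 113; 1; 89; 40; 55; 107; 46; 30; 10; 50; 76; 90; 21; 62; 96; 16; 121; 99; 112; 63; 108; 124; 14; 105; 67; 32; 102; 71; 78; 3; 22; 20; 98; 51; 115; 36; 7; 64; 87; 123; 33; 119; 45; 13; 103; 48; 80; 58; 29; 61; 6; 52; 122; 38; 73; 42; 110]; [:: 0; 31; 100; 103; 28; 98; 56; 5; 117; 89; 59; 50; 84; 23; 14; 26; 38; 82; 77; 51; 63; 15; 29; 70; 55; 120; 66; 20; 8;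 48; 113; 22; 35; 41; 92; 6; 75; 32; 65; 94; 114; 97; 17; 121; 118; 19; 107; 108; 86; 9; 33; 24; 91; 61; 47; 53; 2; 95; 27; 96; 74; 44; 68; 7; 105; 49; 85; 78; 124; 40; 13; 62; 76; 52; 101; 102; 116; 1; 72; 122; 67; 87; 58; 110; 10; 79; 34; 39; 36; 81; 46; 4; 99; 93; 115; 71; 54; 43; 11; 88; 106; 109; 111; 21; 123; 16; 37; 60; 45; 30; 64; 104; 12; 69; 73; 42; 119; 18; 57; 3; 112; 80; 125; 25; 90; 83]; [:: 0; 0; 0; 0; 0; 0; 0; 0; 0; 0; 0; 0; 0; 0; 0; 0; 0; 0; 0; 0; 0; 0; 0; 0; 0; 0; 0; 0; 0; 0; 0; 0; 0; 0; 0; 0; 0; 0; 0; 0; 0; 0; 0; 0; 0; 0; 0; 0; 0; 0; 0; 0; 0; 0; 0; 0; 0; 0; 0; 0; 0; 0; 0; 0; 0; 0; 0; 0; 0; 0; 0; 0; 0; 0; 0; 0; 0; 0; 0; 0; 0; 0; 0; 0; 0; 0; 0; 0; 0; 0; 0; 0; 0; 0; 0; 0; 0; 0; 0; 0; 0; 0; 0; 0; 0; 0; 0; 0; 0; 0; 0; 0; 0; 0; 0; 0; 0; 0; 0; 0; 0; 0; 0; 0; 0; 0]; [:: 0; 20; 121; 72; 22; 32; 85; 11; 104; 111; 108; 69; 38; 29; 4; 40; 96; 48; 59; 25; 79; 1; 23; 43; 84; 76; 88; 62; 6; 70; 105; 28; 124; 33; 100; 10; 57; 18; 78; 46; 83;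 31; 7; 77; 102; 61; 117; 67; 37; 8; 125; 41; 99; 114; 65; 24; 13; 47; 21; 30; 92; 56; 87; 16; 118; 71; 36; 52; 95; 35; 5; 115; 58; 26; 122; 74; 82; 0; 90; 75; 89; 112; 110; 66; 2; 53; 123; 34; 97; 50; 64; 3; 120; 45; 81; 44; 86; 55; 17; 113; 119; 68; 106; 27; 94; 14; 98; 116; 63; 19; 80; 73; 9; 42; 91; 54; 103; 60; 109; 12; 107; 51; 93; 39; 101; 49]; [:: 0; 110; 42; 73; 38; 122; 52; 6; 61; 29; 58; 80; 48; 103; 13; 45; 119; 33; 123; 87; 64; 7; 36; 115; 51; 98; 20; 22; 3; 78; 71; 102; 32; 67; 105; 14; 124; 108; 63; 112; 99; 121; 16; 96; 62; 21; 90; 76; 50; 10; 30; 46; 107; 55; 40; 89; 1; 113; 37; 120; 85; 94; 19; 9; 91; 79; 49; 82; 26; 66; 17; 56; 125; 88; 43; 72; 101; 4; 86; 97; 18; 27; 57; 75; 15; 83; 31; 68; 117; 35; 39; 11; 44; 111; 100; 116; 53; 93; 2; 28; 92; 77; 69; 104; 25; 8; 118; 54; 41; 109; 65; 74; 0; 114; 84; 95; 60; 23; 59; 12; 70; 81; 24; 47; 106; 34]; [:: 0; 49; 101; 39; 93; 51; 107; 12; 109; 60; 103; 54; 91; 42; 9; 73; 80; 19; 63; 116; 98; 14; 94; 27; 106; 68; 119; 113; 17; 55; 86; 44; 81; 45; 120; 3; 64; 50; 97; 34; 123; 53; 2; 66; 110; 112; 89; 75; 90; 0; 82; 74; 122;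 26; 58; 115; 5; 35; 95; 52; 36; 71; 118; 16; 87; 56; 92; 30; 21; 47; 13; 24; 65; 114; 99; 41; 125; 8; 37; 67; 117; 61; 102; 77; 7; 31; 83; 46; 78; 18; 57; 10; 100; 33; 124; 28; 105; 70; 6; 62; 88; 76; 84; 43; 23; 1; 79; 25; 59; 48; 96; 40; 4; 29; 38; 69; 108; 111; 104; 11; 85; 32; 22; 72; 121; 20]; [:: 0; 0; 0; 0; 0; 0; 0; 0; 0; 0; 0; 0; 0; 0; 0; 0; 0; 0; 0; 0; 0; 0; 0; 0; 0; 0; 0; 0; 0; 0; 0; 0; 0; 0; 0; 0; 0; 0; 0; 0; 0; 0; 0; 0; 0; 0; 0; 0; 0; 0; 0; 0; 0; 0; 0; 0; 0; 0; 0; 0; 0; 0; 0; 0; 0; 0; 0; 0; 0; 0; 0; 0; 0; 0; 0; 0; 0; 0; 0; 0; 0; 0; 0; 0; 0; 0; 0; 0; 0; 0; 0; 0; 0; 0; 0; 0; 0; 0; 0; 0; 0; 0; 0; 0; 0; 0; 0; 0; 0; 0; 0; 0; 0; 0; 0; 0; 0; 0; 0; 0; 0; 0; 0; 0; 0; 0]].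
Lemma good126 : goodb 124 L126 W126. Proof. vm_compute. reflexivity. Qed.
Definition L198 : seq (seq nat) := [:: [:: 11; 132; 176; 165; 88; 0; 121; 33; 143; 44; 154; 77; 55; 110; 66; 187; 22; 99; 122; 14; 158; 104; 86; 67; 157; 103; 49; 31; 181; 37; 163; 91; 1; 80; 152; 188; 26; 170; 114; 78; 60; 42; 168; 127; 73; 145; 19; 109; 107; 35; 197; 161; 17; 79; 61; 151; 43; 7; 46; 28; 118; 10; 172; 101; 83; 173; 65; 29; 133; 25; 169; 115; 97; 140; 68; 32; 194; 50; 70; 34; 16; 196; 124; 95; 131; 149; 167; 41; 96; 24; 186; 150; 6; 105; 51; 123; 195; 87; 182; 128; 2; 74; 164; 139; 175; 193; 13; 85; 9; 27; 135; 45; 81; 189; 171; 63; 153; 117; 48; 12; 192; 174; 102; 146; 20; 56; 92; 38; 179; 53; 89; 125; 71; 15; 177; 159; 141; 69; 90; 72; 162; 54; 18; 136; 100; 82; 64; 190; 75; 93; 3; 111; 147; 137; 191; 119; 47; 155; 40; 76; 94; 112; 184; 138; 84; 156; 30; 120; 8; 134; 98; 62; 116; 178; 160; 52; 142; 106; 183; 21; 39; 57; 129; 23; 113; 59; 5; 185; 144; 36; 180; 126; 108; 4; 166; 148; 130; 58]; [:: 110; 11; 88; 176; 143; 187; 66; 132; 99; 165; 22; 121; 77; 0; 44; 154; 55; 33; 118; 46; 10; 172; 28; 81; 45; 27; 9; 135; 182; 128; 2; 74; 164; 83; 29; 101; 173; 65; 133; 25; 169; 115; 97; 68; 50; 140;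 32; 194; 60; 114; 42; 168; 78; 171; 117; 189; 63; 153; 126; 180; 108; 36; 144; 177; 69; 15; 159; 141; 151; 79; 43; 7; 61; 73; 109; 127; 145; 19; 137; 191; 119; 47; 155; 111; 3; 147; 93; 75; 13; 193; 85; 175; 139; 102; 174; 12; 48; 192; 156; 138; 30; 120; 84; 49; 103; 31; 157; 67; 90; 72; 162; 54; 18; 80; 152; 188; 26; 170; 184; 112; 76; 40; 94; 122; 14; 158; 104; 86; 163; 181; 91; 1; 37; 113; 185; 23; 59; 5; 51; 87; 105; 123; 195; 129; 57; 21; 183; 39; 62; 98; 116; 134; 8; 179; 53; 89; 125; 71; 136; 100; 82; 64; 190; 167; 149; 41; 131; 95; 161; 197; 17; 35; 107; 146; 20; 56; 92; 38; 24; 6; 96; 186; 150; 130; 148; 58; 166; 4; 124; 196; 34; 70; 16; 160; 106; 178; 52; 142]; [:: 33; 44; 22; 121; 165; 99; 110; 0; 176; 143; 77; 132; 66; 88; 11; 55; 154; 187; 145; 127; 19; 109; 73; 93; 147; 75; 3; 111; 18; 54; 72; 90; 162; 74; 2; 164; 128; 182; 79; 61; 151; 43; 7; 166; 58; 4; 148; 130; 21; 129; 183; 39; 57; 76; 184; 40; 94; 112; 48; 12; 192; 174; 102; 25; 97; 133; 169; 115; 104; 158; 86; 14; 122; 87; 195; 51; 105; 123; 138; 84; 156; 30; 120; 5; 59; 185; 113; 23; 186; 96; 150; 6; 24; 175; 85; 139; 193; 13; 29; 65; 83; 101; 173; 34; 124; 70; 16; 196; 125; 89; 71; 53; 179; 144;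 36; 180; 126; 108; 117; 153; 171; 189; 63; 37; 1; 181; 163; 91; 45; 135; 81; 27; 9; 62; 98; 116; 134; 8; 157; 31; 67; 103; 49; 131; 41; 95; 149; 167; 159; 15; 141; 69; 177; 35; 17; 107; 197; 161; 78; 168; 114; 60; 42; 106; 142; 160; 178; 52; 50; 194; 68; 140; 32; 152; 170; 80; 188; 26; 28; 172; 46; 118; 10; 190; 64; 100; 136; 82; 119; 137; 47; 155; 191; 146; 20; 56; 92; 38]].
Definition W198 : seq (seq nat) := [:: [:: 5; 32; 100; 150; 193; 186; 92; 57; 168; 108; 61; 0; 119; 106; 19; 133; 80; 52; 142; 46; 124; 179; 16; 183; 89; 69; 36; 109; 59; 67; 166; 27; 75; 7; 79; 49; 189; 29; 127; 180; 158; 87; 41; 56; 9; 111; 58; 156; 118; 26; 77; 94; 175; 129; 141; 12; 125; 181; 197; 185; 40; 54; 171; 115; 146; 66; 14; 23; 74; 137; 78; 132; 139; 44; 101; 148; 159; 11; 39; 53; 33; 112; 145; 64; 164; 107; 22; 97; 4; 130; 138; 31; 126; 149; 160; 83; 88; 72; 170; 17; 144; 63; 122; 25; 21; 93; 177; 48; 192; 47; 13; 151; 161; 184; 38; 71; 172; 117; 60; 155; 167; 6; 18; 95; 82; 131; 191; 43; 99; 182; 196; 84; 1; 68; 169; 110; 143; 153; 163; 103; 73; 136; 176; 8; 188; 45; 123; 152; 195; 85; 91; 55; 34; 116; 10; 157; 165; 24; 20; 135; 174; 51; 140; 30; 102; 3; 194; 86; 42; 70; 37; 114; 62; 65; 121;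 104; 2; 134; 173; 128; 190; 28; 98; 178; 162; 187; 90; 15; 35; 113; 147; 154; 120; 105; 76; 96; 81; 50]; [:: 13; 131; 30; 84; 187; 137; 179; 71; 152; 26; 20; 1; 95; 88; 124; 65; 192; 170; 112; 77; 174; 145; 10; 135; 178; 39; 116; 25; 22; 34; 100; 105; 46; 17; 190; 171; 61; 132; 177; 147; 121; 165; 50; 70; 14; 24; 19; 81; 96; 103; 44; 138; 196; 154; 111; 16; 175; 144; 185; 136; 48; 72; 148; 56; 161; 37; 6; 107; 43; 64; 191; 157; 109; 73; 31; 87; 120; 12; 52; 69; 113; 23; 160; 33; 102; 90; 127; 139; 2; 155; 108; 130; 176; 86; 122; 167; 180; 42; 149; 8; 159; 35; 93; 104; 126; 140; 194; 172; 60; 74; 0; 83; 119; 133; 49; 41; 150; 54; 18; 80; 101; 11; 123; 141; 188; 156; 58; 75; 29; 143; 183; 166; 7; 38; 151; 27; 158; 78; 99; 92; 45; 67; 197; 4; 62; 76; 173; 85; 184; 164; 182; 68; 114; 57; 15; 82; 98; 106; 125; 66; 193; 168; 110; 128; 32; 9; 186; 163; 51; 40; 117; 53; 21; 36; 94; 91; 3; 63; 195; 153; 59; 129; 28; 146; 118; 134; 181; 5; 115; 55; 162; 79; 97; 89; 47; 142; 189; 169]; [:: 7; 124; 34; 26; 45; 83; 91; 42; 137; 132; 182; 14; 59; 97; 71; 149; 106; 154; 28; 20; 194; 48; 2; 87; 92; 63; 177; 131; 178; 98; 81; 139; 172; 0; 103; 153; 114; 123; 197; 51; 55; 144; 162;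 41; 1; 128; 180; 190; 58; 142; 168; 75; 167; 111; 29; 15; 195; 52; 44; 84; 161; 39; 133; 122; 184; 99; 12; 140; 170; 151; 105; 110; 30; 22; 33; 25; 53; 10; 158; 38; 175; 130; 187; 100; 79; 94; 70; 73; 13; 109; 31; 127; 196; 23; 56; 145; 89; 64; 134; 5; 185; 101; 62; 141; 68; 76; 163; 155; 117; 21; 6; 27; 57; 86; 160; 67; 135; 118; 181; 188; 82; 3; 72; 77; 104; 108; 116; 19; 36; 49; 47; 143; 11; 65; 136; 129; 186; 189; 78; 95; 171; 150; 164; 9; 113; 18; 193; 24; 46; 146; 90; 40; 173; 119; 16; 191; 80; 138; 69; 148; 165; 157; 32; 126; 35; 4; 43; 147; 159; 66; 174; 120; 179; 102; 61; 93; 8; 152; 166; 112; 115; 125; 37; 50; 54; 85; 88; 17; 176; 121; 183; 192; 60; 96; 169; 74; 107; 156]; [:: 0; 0; 0; 0; 0; 0; 0; 0; 0; 0; 0; 0; 0; 0; 0; 0; 0; 0; 0; 0; 0; 0; 0; 0; 0; 0; 0; 0; 0; 0; 0; 0; 0; 0; 0; 0; 0; 0; 0; 0; 0; 0; 0; 0; 0; 0; 0; 0; 0; 0; 0; 0; 0; 0; 0; 0; 0; 0; 0; 0; 0; 0; 0; 0; 0; 0; 0; 0; 0; 0; 0; 0; 0; 0; 0; 0; 0; 0; 0; 0; 0; 0; 0; 0; 0; 0; 0; 0; 0; 0; 0; 0; 0; 0; 0; 0; 0; 0; 0; 0; 0; 0; 0; 0; 0; 0; 0; 0; 0; 0; 0;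 0; 0; 0; 0; 0; 0; 0; 0; 0; 0; 0; 0; 0; 0; 0; 0; 0; 0; 0; 0; 0; 0; 0; 0; 0; 0; 0; 0; 0; 0; 0; 0; 0; 0; 0; 0; 0; 0; 0; 0; 0; 0; 0; 0; 0; 0; 0; 0; 0; 0; 0; 0; 0; 0; 0; 0; 0; 0; 0; 0; 0; 0; 0; 0; 0; 0; 0; 0; 0; 0; 0; 0; 0; 0; 0; 0; 0; 0; 0; 0; 0; 0; 0; 0; 0; 0; 0]; [:: 0; 185; 85; 93; 18; 45; 124; 143; 122; 172; 60; 5; 160; 148; 64; 179; 128; 31; 107; 114; 188; 142; 14; 44; 123; 167; 98; 171; 62; 89; 155; 77; 173; 15; 132; 32; 72; 186; 189; 138; 26; 79; 193; 144; 8; 168; 59; 48; 161; 76; 176; 36; 57; 39; 106; 6; 191; 140; 22; 43; 194; 145; 118; 112; 137; 92; 17; 73; 177; 181; 129; 42; 104; 115; 86; 94; 25; 9; 196; 146; 102; 170; 136; 88; 157; 150; 67; 35; 2; 40; 103; 183; 192; 97; 27; 80; 125; 166; 119; 7; 133; 90; 158; 75; 66; 37; 53; 29; 71; 113; 13; 95; 24; 47; 197; 165; 120; 108; 58; 49; 156; 1; 63; 34; 131; 41; 70; 116; 84; 141; 21; 78; 10; 164; 121; 169; 135; 52; 154; 152; 174; 180; 54; 4; 69; 117; 190; 96; 20; 81; 127; 147; 101; 109; 11; 50; 153; 74; 65; 178; 55; 30; 105; 184; 87; 16; 19; 82; 195; 163; 100; 110; 61; 91; 159; 151; 12; 182; 56;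 38; 68; 187; 83; 139; 23; 46; 126; 3; 99; 111; 134; 51; 162; 149; 175; 33; 130; 28]; [:: 0; 31; 96; 53; 82; 143; 33; 136; 130; 117; 24; 6; 155; 22; 50; 44; 59; 39; 87; 124; 197; 120; 13; 147; 35; 188; 173; 116; 25; 68; 170; 183; 163; 7; 61; 38; 90; 32; 196; 122; 65; 139; 151; 135; 3; 113; 26; 179; 156; 184; 166; 104; 161; 73; 86; 14; 193; 119; 80; 144; 150; 137; 132; 99; 110; 69; 16; 186; 167; 46; 62; 74; 84; 125; 97; 54; 63; 10; 149; 134; 177; 115; 108; 70; 172; 19; 48; 107; 1; 76; 83; 30; 195; 57; 66; 140; 36; 189; 131; 9; 112; 71; 153; 187; 49; 103; 159; 40; 88; 123; 17; 55; 67; 146; 148; 192; 129; 100; 27; 182; 171; 4; 51; 105; 60; 77; 89; 126; 93; 118; 78; 138; 15; 190; 128; 114; 109; 181; 169; 20; 164; 45; 162; 11; 91; 127; 194; 56; 79; 141; 34; 133; 176; 98; 2; 178; 168; 185; 52; 43; 158; 42; 85; 28; 94; 8; 81; 142; 152; 191; 175; 101; 23; 72; 154; 18; 0; 47; 160; 75; 92; 29; 95; 121; 64; 145; 37; 12; 174; 102; 111; 180; 157; 21; 165; 106; 58; 41]; [:: 0; 28; 130; 33; 175; 149; 162; 51; 134; 111; 99; 3; 126; 46; 23; 139; 83; 187; 68; 38; 56; 182; 12; 151; 159; 91; 61; 110; 100; 163; 195; 82; 19; 16; 87; 184; 105; 30; 55; 178; 65; 74; 153; 50; 11; 109; 101;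 147; 127; 81; 20; 96; 190; 117; 69; 4; 54; 180; 174; 152; 154; 52; 135; 169; 121; 164; 10; 78; 21; 141; 84; 116; 70; 41; 131; 34; 63; 1; 156; 49; 58; 108; 120; 165; 197; 47; 24; 95; 13; 113; 71; 29; 53; 37; 66; 75; 158; 90; 133; 7; 119; 166; 125; 80; 27; 97; 192; 183; 103; 40; 2; 35; 67; 150; 157; 88; 136; 170; 102; 146; 196; 9; 25; 94; 86; 115; 104; 42; 129; 181; 177; 73; 17; 92; 137; 112; 118; 145; 194; 43; 22; 140; 191; 6; 106; 39; 57; 36; 176; 76; 161; 48; 59; 168; 8; 144; 193; 79; 26; 138; 189; 186; 72; 32; 132; 15; 173; 77; 155; 89; 62; 171; 98; 167; 123; 44; 14; 142; 188; 114; 107; 31; 128; 179; 64; 148; 160; 5; 60; 172; 122; 143; 124; 45; 18; 93; 85; 185]; [:: 0; 0; 0; 0; 0; 0; 0; 0; 0; 0; 0; 0; 0; 0; 0; 0; 0; 0; 0; 0; 0; 0; 0; 0; 0; 0; 0; 0; 0; 0; 0; 0; 0; 0; 0; 0; 0; 0; 0; 0; 0; 0; 0; 0; 0; 0; 0; 0; 0; 0; 0; 0; 0; 0; 0; 0; 0; 0; 0; 0; 0; 0; 0; 0; 0; 0; 0; 0; 0; 0; 0; 0; 0; 0; 0; 0; 0; 0; 0; 0; 0; 0; 0; 0; 0; 0; 0; 0; 0; 0; 0; 0; 0; 0; 0; 0; 0; 0; 0; 0; 0; 0; 0; 0; 0; 0; 0; 0; 0; 0; 0; 0; 0; 0; 0;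 0; 0; 0; 0; 0; 0; 0; 0; 0; 0; 0; 0; 0; 0; 0; 0; 0; 0; 0; 0; 0; 0; 0; 0; 0; 0; 0; 0; 0; 0; 0; 0; 0; 0; 0; 0; 0; 0; 0; 0; 0; 0; 0; 0; 0; 0; 0; 0; 0; 0; 0; 0; 0; 0; 0; 0; 0; 0; 0; 0; 0; 0; 0; 0; 0; 0; 0; 0; 0; 0; 0; 0; 0; 0; 0; 0; 0; 0; 0; 0; 0; 0; 0]; [:: 0; 111; 32; 169; 161; 188; 26; 164; 115; 33; 130; 12; 177; 124; 193; 103; 144; 81; 40; 101; 141; 52; 9; 192; 27; 88; 67; 34; 132; 152; 186; 122; 179; 14; 146; 82; 154; 112; 140; 48; 76; 57; 62; 167; 17; 36; 129; 68; 174; 121; 180; 133; 87; 96; 38; 3; 139; 50; 158; 189; 61; 163; 117; 21; 47; 151; 2; 118; 181; 107; 147; 95; 41; 99; 29; 172; 75; 0; 58; 165; 65; 37; 46; 149; 184; 123; 194; 134; 5; 94; 42; 110; 138; 171; 77; 53; 24; 89; 116; 16; 43; 148; 176; 120; 197; 135; 83; 79; 157; 102; 13; 168; 74; 191; 60; 92; 114; 19; 128; 69; 187; 8; 195; 136; 145; 93; 156; 98; 30; 51; 159; 54; 7; 90; 113; 35; 45; 72; 183; 126; 182; 106; 84; 10; 153; 100; 142; 170; 162; 55; 25; 166; 63; 22; 6; 70; 185; 119; 196; 105; 85; 80; 39; 108; 28; 1; 160; 56; 59; 91; 64; 18; 131; 150; 175; 125; 4; 104; 86; 97; 155; 109; 31;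 49; 73; 190; 23; 11; 66; 20; 44; 71; 173; 127; 178; 137; 143; 78]; [:: 0; 41; 58; 106; 165; 21; 157; 180; 111; 102; 174; 12; 37; 145; 64; 121; 95; 29; 92; 75; 160; 47; 0; 18; 154; 72; 23; 101; 175; 191; 152; 142; 81; 8; 94; 28; 85; 42; 158; 43; 52; 185; 168; 178; 2; 98; 176; 133; 34; 141; 79; 56; 194; 127; 91; 11; 162; 45; 164; 20; 169; 181; 109; 114; 128; 190; 15; 138; 78; 118; 93; 126; 89; 77; 60; 105; 51; 4; 171; 182; 27; 100; 129; 192; 148; 146; 67; 55; 17; 123; 88; 40; 159; 103; 49; 187; 153; 71; 112; 9; 131; 189; 36; 140; 66; 57; 195; 30; 83; 76; 1; 107; 48; 19; 172; 70; 108; 115; 177; 134; 149; 10; 63; 54; 97; 125; 84; 74; 62; 46; 167; 186; 16; 69; 110; 99; 132; 137; 150; 144; 80; 119; 193; 14; 86; 73; 161; 104; 166; 184; 156; 179; 26; 113; 3; 135; 151; 139; 65; 122; 196; 32; 90; 38; 61; 7; 163; 183; 170; 68; 25; 116; 173; 188; 35; 147; 13; 120; 197; 124; 87; 39; 59; 44; 50; 22; 155; 6; 24; 117; 130; 136; 33; 143; 82; 53; 96; 31]; [:: 0; 78; 143; 137; 178; 127; 173; 71; 44; 20; 66; 11; 23; 190; 73; 49; 31; 109; 155; 97; 86; 104; 4; 125; 175; 150; 131; 18; 64; 91; 59; 56; 160; 1; 28; 108; 39; 80; 85; 105; 196; 119; 185; 70; 6; 22; 63; 166; 25; 55; 162;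 170; 142; 100; 153; 10; 84; 106; 182; 126; 183; 72; 45; 35; 113; 90; 7; 54; 159; 51; 30; 98; 156; 93; 145; 136; 195; 8; 187; 69; 128; 19; 114; 92; 60; 191; 74; 168; 13; 102; 157; 79; 83; 135; 197; 120; 176; 148; 43; 16; 116; 89; 24; 53; 77; 171; 138; 110; 42; 94; 5; 134; 194; 123; 184; 149; 46; 37; 65; 165; 58; 0; 75; 172; 29; 99; 41; 95; 147; 107; 181; 118; 2; 151; 47; 21; 117; 163; 61; 189; 158; 50; 139; 3; 38; 96; 87; 133; 180; 121; 174; 68; 129; 36; 17; 167; 62; 57; 76; 48; 140; 112; 154; 82; 146; 14; 179; 122; 186; 152; 132; 34; 67; 88; 27; 192; 9; 52; 141; 101; 40; 81; 144; 103; 193; 124; 177; 12; 130; 33; 115; 164; 26; 188; 161; 169; 32; 111]; [:: 0; 0; 0; 0; 0; 0; 0; 0; 0; 0; 0; 0; 0; 0; 0; 0; 0; 0; 0; 0; 0; 0; 0; 0; 0; 0; 0; 0; 0; 0; 0; 0; 0; 0; 0; 0; 0; 0; 0; 0; 0; 0; 0; 0; 0; 0; 0; 0; 0; 0; 0; 0; 0; 0; 0; 0; 0; 0; 0; 0; 0; 0; 0; 0; 0; 0; 0; 0; 0; 0; 0; 0; 0; 0; 0; 0; 0; 0; 0; 0; 0; 0; 0; 0; 0; 0; 0; 0; 0; 0; 0; 0; 0; 0; 0; 0; 0; 0; 0; 0; 0; 0; 0; 0; 0; 0; 0; 0; 0; 0; 0; 0; 0; 0; 0; 0; 0; 0; 0;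 0; 0; 0; 0; 0; 0; 0; 0; 0; 0; 0; 0; 0; 0; 0; 0; 0; 0; 0; 0; 0; 0; 0; 0; 0; 0; 0; 0; 0; 0; 0; 0; 0; 0; 0; 0; 0; 0; 0; 0; 0; 0; 0; 0; 0; 0; 0; 0; 0; 0; 0; 0; 0; 0; 0; 0; 0; 0; 0; 0; 0; 0; 0; 0; 0; 0; 0; 0; 0; 0; 0; 0; 0; 0; 0; 0; 0; 0; 0]].
Lemma good198 : goodb 196 L198 W198. Proof. vm_compute. reflexivity. Qed.
Definition L234 : seq (seq nat) := [:: [:: 65; 78; 104; 39; 52; 0; 13; 195; 143; 26; 208; 221; 91; 182; 156; 169; 130; 117; 176; 86; 158; 50; 122; 32; 16; 178; 142; 196; 160; 88; 7; 151; 223; 115; 187; 97; 77; 23; 113; 95; 185; 131; 215; 125; 197; 89; 161; 71; 101; 173; 209; 155; 191; 29; 206; 98; 44; 8; 188; 80; 14; 68; 212; 230; 140; 194; 144; 198; 108; 126; 36; 90; 181; 127; 217; 199; 55; 1; 84; 174; 102; 210; 138; 228; 226; 28; 46; 136; 154; 190; 22; 40; 166; 94; 220; 4; 147; 129; 3; 75; 183; 165; 233; 179; 35; 17; 107; 53; 211; 139; 103; 157; 121; 49; 110; 200; 128; 2; 164; 20; 92; 146; 56; 74; 218; 38; 62; 134; 170; 116; 152; 224; 25; 205; 61; 43; 133; 79; 112; 76; 58; 202; 184; 148; 150; 60; 132; 24; 96; 6; 119; 227; 47; 83; 137; 11; 214; 70; 232; 106; 34; 124; 167; 59; 5; 203;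 149; 41; 216; 180; 162; 72; 54; 18; 201; 57; 219; 93; 21; 111; 118; 172; 82; 100; 10; 64; 19; 109; 37; 145; 73; 163; 213; 15; 33; 123; 141; 177; 51; 231; 87; 69; 159; 105; 48; 66; 192; 120; 12; 30; 85; 229; 67; 193; 31; 175; 204; 222; 114; 42; 168; 186; 207; 153; 9; 225; 81; 27; 63; 189; 135; 99; 45; 171]; [:: 182; 65; 52; 104; 143; 169; 156; 78; 117; 39; 130; 13; 221; 0; 26; 208; 91; 195; 54; 162; 216; 18; 72; 180; 132; 6; 60; 96; 150; 24; 203; 167; 149; 59; 41; 5; 171; 45; 99; 135; 189; 63; 76; 202; 148; 112; 58; 184; 176; 86; 158; 50; 122; 32; 160; 142; 16; 88; 196; 178; 47; 11; 227; 137; 119; 83; 229; 193; 175; 85; 67; 31; 210; 84; 138; 174; 228; 102; 77; 23; 113; 95; 185; 131; 118; 172; 82; 100; 10; 64; 179; 17; 53; 233; 35; 107; 215; 125; 197; 89; 161; 71; 170; 224; 134; 152; 62; 116; 105; 159; 69; 87; 231; 51; 183; 3; 147; 165; 75; 129; 4; 220; 94; 166; 40; 22; 20; 164; 2; 128; 200; 110; 42; 204; 168; 222; 186; 114; 139; 157; 49; 211; 103; 121; 133; 61; 25; 79; 43; 205; 46; 190; 28; 154; 226; 136; 80; 188; 8; 44; 98; 206; 19; 109; 37; 145; 73; 163; 214; 70; 232; 106; 34; 124; 21; 219; 201; 111; 93; 57; 223; 97; 151; 187; 7; 115; 155; 101; 191; 173; 29; 209; 90; 36; 126; 108; 198; 144;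 27; 81; 225; 9; 153; 207; 55; 217; 181; 1; 199; 127; 146; 74; 38; 92; 56; 218; 30; 12; 120; 192; 66; 48; 140; 212; 14; 194; 230; 68; 177; 141; 123; 33; 15; 213]; [:: 195; 26; 130; 13; 39; 117; 182; 0; 104; 143; 221; 78; 156; 52; 65; 91; 208; 169; 201; 57; 219; 93; 21; 111; 157; 211; 121; 139; 49; 103; 109; 145; 163; 19; 37; 73; 180; 72; 18; 216; 162; 54; 217; 1; 127; 55; 181; 199; 164; 128; 110; 20; 2; 200; 32; 122; 50; 158; 86; 176; 70; 106; 124; 214; 232; 34; 46; 190; 28; 154; 226; 136; 177; 141; 123; 33; 15; 213; 17; 233; 107; 179; 53; 35; 75; 147; 183; 129; 165; 3; 89; 215; 161; 125; 71; 197; 120; 48; 12; 66; 30; 192; 56; 38; 146; 218; 92; 74; 25; 205; 61; 43; 133; 79; 223; 97; 151; 187; 7; 115; 167; 59; 5; 203; 149; 41; 4; 220; 94; 166; 40; 22; 140; 212; 14; 194; 230; 68; 134; 116; 224; 62; 170; 152; 222; 42; 186; 204; 114; 168; 64; 10; 100; 82; 172; 118; 96; 132; 150; 6; 24; 60; 51; 231; 87; 69; 159; 105; 90; 36; 126; 108; 198; 144; 153; 225; 27; 207; 9; 81; 191; 209; 101; 29; 155; 173; 210; 84; 138; 174; 228; 102; 23; 95; 131; 77; 113; 185; 16; 178; 142; 196; 160; 88; 45; 135; 63; 171; 99; 189; 83; 119; 137; 227; 11; 47; 148; 184; 202; 58; 76; 112; 85; 229; 67; 193; 31; 175; 188; 44;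 206; 80; 8; 98]].
Definition W234 : seq (seq nat) := [:: [:: 5; 77; 117; 98; 95; 164; 149; 30; 57; 224; 184; 155; 208; 6; 60; 193; 24; 105; 173; 186; 119; 178; 90; 37; 147; 132; 9; 227; 85; 53; 209; 214; 23; 194; 160; 104; 70; 188; 125; 3; 91; 167; 219; 135; 56; 232; 86; 152; 204; 113; 21; 198; 4; 107; 172; 76; 122; 175; 140; 163; 145; 134; 126; 228; 185; 0; 205; 212; 61; 201; 157; 47; 171; 190; 123; 99; 139; 36; 1; 137; 59; 226; 182; 153; 78; 210; 19; 200; 29; 45; 71; 12; 120; 177; 93; 39; 148; 35; 55; 231; 183; 48; 80; 110; 2; 203; 159; 106; 68; 187; 114; 179; 138; 38; 218; 33; 129; 17; 180; 150; 207; 112; 22; 195; 161; 43; 69; 73; 116; 97; 16; 41; 146; 136; 127; 230; 87; 154; 82; 109; 64; 196; 26; 8; 66; 189; 121; 96; 143; 166; 144; 31; 130; 223; 88; 51; 14; 111; 20; 202; 28; 46; 170; 191; 118; 101; 92; 162; 220; 15; 128; 233; 181; 49; 79; 215; 18; 197; 25; 103; 169; 72; 13; 100; 142; 40; 221; 34; 58; 229; 89; 52; 206; 213; 65; 7; 27; 44; 67; 75; 115; 174; 141; 165; 216; 133; 54; 222; 10; 50; 81; 108; 62; 192; 156; 42; 168; 74; 124; 176; 94; 11; 217; 32; 131; 225; 84; 151; 83; 211; 63; 199; 158; 102]; [:: 13; 207; 128; 115; 120; 35; 25; 184; 158; 201; 88; 61; 217; 11; 224; 232; 56; 91; 21; 162;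 126; 174; 125; 79; 29; 146; 14; 198; 152; 190; 216; 71; 53; 231; 172; 94; 193; 164; 212; 9; 124; 34; 132; 148; 159; 37; 150; 60; 221; 140; 51; 113; 2; 92; 18; 204; 214; 179; 46; 33; 26; 145; 106; 41; 89; 1; 220; 70; 227; 110; 169; 101; 22; 166; 211; 118; 42; 78; 7; 147; 156; 199; 86; 65; 73; 69; 49; 111; 57; 99; 192; 16; 213; 178; 122; 81; 27; 181; 160; 38; 87; 187; 77; 142; 3; 108; 171; 95; 195; 163; 131; 177; 45; 80; 137; 185; 107; 8; 84; 64; 218; 143; 52; 230; 173; 97; 194; 209; 129; 119; 10; 83; 24; 144; 104; 39; 155; 63; 74; 138; 222; 229; 55; 4; 197; 165; 210; 116; 44; 32; 28; 182; 105; 202; 153; 186; 6; 139; 50; 109; 54; 100; 19; 167; 127; 117; 123; 31; 134; 5; 102; 36; 85; 189; 75; 68; 48; 228; 59; 90; 23; 206; 0; 114; 47; 82; 136; 183; 157; 40; 151; 188; 219; 67; 225; 17; 58; 98; 196; 208; 130; 176; 43; 30; 133; 149; 161; 203; 15; 191; 72; 141; 223; 233; 168; 96; 20; 205; 215; 175; 121; 12; 135; 180; 103; 200; 154; 62; 76; 66; 226; 112; 170; 93]; [:: 7; 43; 52; 89; 126; 122; 159; 118; 232; 178; 151; 214; 98; 3; 134; 76; 198; 78; 38; 33; 51; 22; 131; 192; 160; 108; 1; 176; 68; 183; 100; 226; 54; 75; 65; 83; 169; 34; 103; 4; 130; 125; 145; 111; 229; 204; 66; 215; 97; 28; 56; 162;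 13; 82; 41; 45; 102; 19; 219; 121; 161; 110; 141; 206; 150; 14; 99; 224; 137; 165; 60; 94; 37; 35; 107; 84; 220; 195; 11; 113; 231; 179; 153; 210; 187; 222; 58; 164; 203; 90; 168; 15; 106; 21; 128; 193; 156; 115; 233; 208; 152; 182; 191; 29; 8; 167; 61; 80; 171; 30; 50; 23; 221; 196; 148; 119; 139; 5; 155; 211; 96; 26; 55; 74; 62; 93; 170; 44; 49; 87; 2; 194; 157; 112; 138; 205; 71; 212; 188; 27; 132; 73; 200; 9; 173; 31; 104; 85; 216; 124; 158; 116; 143; 174; 69; 184; 12; 24; 57; 166; 202; 92; 40; 32; 48; 88; 129; 120; 149; 17; 142; 207; 154; 185; 189; 227; 59; 72; 199; 81; 36; 46; 6; 86; 217; 197; 146; 117; 228; 209; 67; 180; 101; 225; 135; 0; 201; 95; 172; 47; 53; 18; 218; 123; 147; 109; 230; 177; 16; 181; 186; 25; 133; 77; 63; 91; 39; 42; 105; 20; 127; 10; 144; 114; 140; 175; 70; 213; 190; 223; 136; 163; 64; 79]; [:: 0; 0; 0; 0; 0; 0; 0; 0; 0; 0; 0; 0; 0; 0; 0; 0; 0; 0; 0; 0; 0; 0; 0; 0; 0; 0; 0; 0; 0; 0; 0; 0; 0; 0; 0; 0; 0; 0; 0; 0; 0; 0; 0; 0; 0; 0; 0; 0; 0; 0; 0; 0; 0; 0; 0; 0; 0; 0; 0; 0; 0; 0; 0; 0; 0; 0; 0; 0; 0; 0; 0; 0; 0; 0; 0; 0; 0; 0; 0; 0; 0; 0; 0; 0;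 0; 0; 0; 0; 0; 0; 0; 0; 0; 0; 0; 0; 0; 0; 0; 0; 0; 0; 0; 0; 0; 0; 0; 0; 0; 0; 0; 0; 0; 0; 0; 0; 0; 0; 0; 0; 0; 0; 0; 0; 0; 0; 0; 0; 0; 0; 0; 0; 0; 0; 0; 0; 0; 0; 0; 0; 0; 0; 0; 0; 0; 0; 0; 0; 0; 0; 0; 0; 0; 0; 0; 0; 0; 0; 0; 0; 0; 0; 0; 0; 0; 0; 0; 0; 0; 0; 0; 0; 0; 0; 0; 0; 0; 0; 0; 0; 0; 0; 0; 0; 0; 0; 0; 0; 0; 0; 0; 0; 0; 0; 0; 0; 0; 0; 0; 0; 0; 0; 0; 0; 0; 0; 0; 0; 0; 0; 0; 0; 0; 0; 0; 0; 0; 0; 0; 0; 0; 0; 0; 0; 0; 0; 0; 0; 0; 0; 0; 0; 0; 0]; [:: 0; 133; 168; 184; 97; 67; 202; 78; 187; 140; 28; 206; 230; 1; 38; 195; 125; 144; 176; 152; 172; 64; 100; 91; 198; 75; 8; 143; 56; 212; 232; 225; 21; 197; 110; 149; 87; 151; 30; 16; 98; 69; 126; 73; 190; 106; 54; 208; 229; 44; 22; 50; 2; 148; 179; 135; 33; 61; 165; 71; 201; 76; 159; 102; 29; 5; 231; 222; 41; 52; 111; 117; 175; 150; 32; 181; 166; 90; 10; 74; 188; 142; 26; 205; 219; 226; 23; 49; 120; 118; 85; 6; 35; 63; 101; 93; 200; 83; 186; 105; 27; 213; 220; 46; 12; 51; 108; 146; 84; 155; 169; 65; 167; 92; 131; 81;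 157; 7; 24; 207; 228; 47; 18; 192; 112; 119; 89; 134; 173; 180; 14; 95; 203; 77; 156; 104; 59; 209; 221; 42; 36; 194; 123; 4; 88; 154; 34; 183; 162; 66; 199; 79; 161; 139; 57; 211; 17; 43; 19; 48; 121; 114; 178; 153; 170; 182; 96; 68; 128; 3; 160; 107; 25; 210; 216; 223; 20; 196; 124; 147; 174; 136; 13; 185; 163; 94; 130; 82; 191; 103; 55; 215; 233; 227; 39; 15; 122; 115; 86; 137; 171; 60; 164; 70; 127; 72; 189; 138; 11; 214; 217; 45; 37; 193; 109; 116; 177; 132; 31; 62; 99; 9; 129; 80; 158; 141; 58; 204; 218; 224; 40; 53; 113; 145]; [:: 0; 153; 210; 204; 72; 92; 31; 87; 67; 99; 160; 137; 178; 4; 142; 106; 63; 203; 145; 231; 214; 26; 77; 40; 35; 187; 3; 96; 196; 19; 179; 81; 225; 105; 45; 198; 170; 232; 217; 8; 76; 95; 110; 186; 70; 49; 195; 134; 174; 117; 226; 122; 1; 199; 147; 150; 216; 27; 126; 91; 32; 191; 163; 53; 161; 6; 175; 78; 140; 124; 44; 183; 149; 233; 221; 209; 128; 41; 15; 190; 68; 97; 158; 135; 57; 82; 227; 121; 62; 184; 172; 14; 220; 24; 74; 38; 33; 86; 66; 50; 159; 22; 58; 115; 0; 123; 47; 201; 173; 228; 211; 28; 130; 39; 111; 85; 162; 9; 156; 132; 177; 114; 222; 104; 43; 185; 168; 155; 215; 206; 13; 36; 30; 188; 165; 51; 194; 136; 59; 119; 141; 103; 64; 11; 169; 229; 218; 208;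 127; 94; 34; 84; 164; 100; 193; 23; 16; 118; 223; 120; 65; 180; 144; 230; 212; 205; 75; 90; 109; 12; 167; 48; 157; 20; 54; 79; 224; 102; 60; 200; 146; 152; 17; 207; 129; 37; 108; 89; 71; 52; 192; 21; 176; 83; 139; 7; 61; 181; 171; 154; 213; 25; 131; 93; 113; 189; 69; 101; 2; 18; 55; 116; 138; 107; 46; 182; 148; 151; 219; 29; 73; 10; 112; 88; 166; 98; 197; 133; 56; 80; 143; 125; 42; 202]; [:: 0; 145; 113; 53; 40; 224; 218; 204; 58; 141; 158; 80; 129; 9; 99; 62; 31; 132; 177; 116; 109; 193; 37; 45; 217; 214; 11; 138; 189; 72; 127; 70; 164; 60; 171; 137; 86; 115; 122; 15; 39; 227; 233; 215; 55; 103; 191; 82; 130; 94; 163; 185; 13; 136; 174; 147; 124; 196; 20; 223; 216; 210; 25; 107; 160; 3; 128; 68; 96; 182; 170; 153; 178; 114; 121; 48; 19; 43; 17; 211; 57; 139; 161; 79; 199; 66; 162; 183; 34; 154; 88; 4; 123; 194; 36; 42; 221; 209; 59; 104; 156; 77; 203; 95; 14; 180; 173; 134; 89; 119; 112; 192; 18; 47; 228; 207; 24; 7; 157; 81; 131; 92; 167; 65; 169; 155; 84; 146; 108; 51; 12; 46; 220; 213; 27; 105; 186; 83; 200; 93; 101; 63; 35; 6; 85; 118; 120; 49; 23; 226; 219; 205; 26; 142; 188; 74; 10; 90; 166; 181; 32; 150; 175; 117; 111; 52; 41; 222; 231; 5; 29; 102; 159; 76; 201; 71; 165; 61; 33; 135;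 179; 148; 2; 50; 22; 44; 229; 208; 54; 106; 190; 73; 126; 69; 98; 16; 30; 151; 87; 149; 110; 197; 21; 225; 232; 212; 56; 143; 8; 75; 198; 91; 100; 64; 172; 152; 176; 144; 125; 195; 38; 1; 230; 206; 28; 140; 187; 78; 202; 67; 97; 184; 168; 133]; [:: 0; 0; 0; 0; 0; 0; 0; 0; 0; 0; 0; 0; 0; 0; 0; 0; 0; 0; 0; 0; 0; 0; 0; 0; 0; 0; 0; 0; 0; 0; 0; 0; 0; 0; 0; 0; 0; 0; 0; 0; 0; 0; 0; 0; 0; 0; 0; 0; 0; 0; 0; 0; 0; 0; 0; 0; 0; 0; 0; 0; 0; 0; 0; 0; 0; 0; 0; 0; 0; 0; 0; 0; 0; 0; 0; 0; 0; 0; 0; 0; 0; 0; 0; 0; 0; 0; 0; 0; 0; 0; 0; 0; 0; 0; 0; 0; 0; 0; 0; 0; 0; 0; 0; 0; 0; 0; 0; 0; 0; 0; 0; 0; 0; 0; 0; 0; 0; 0; 0; 0; 0; 0; 0; 0; 0; 0; 0; 0; 0; 0; 0; 0; 0; 0; 0; 0; 0; 0; 0; 0; 0; 0; 0; 0; 0; 0; 0; 0; 0; 0; 0; 0; 0; 0; 0; 0; 0; 0; 0; 0; 0; 0; 0; 0; 0; 0; 0; 0; 0; 0; 0; 0; 0; 0; 0; 0; 0; 0; 0; 0; 0; 0; 0; 0; 0; 0; 0; 0; 0; 0; 0; 0; 0; 0; 0; 0; 0; 0; 0; 0; 0; 0; 0; 0; 0; 0; 0; 0; 0; 0; 0; 0;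 0; 0; 0; 0; 0; 0; 0; 0; 0; 0; 0; 0; 0; 0; 0; 0; 0; 0; 0; 0; 0; 0]; [:: 0; 225; 59; 67; 34; 138; 80; 232; 110; 41; 204; 198; 48; 8; 119; 74; 126; 187; 155; 145; 55; 44; 31; 99; 79; 85; 17; 40; 135; 25; 51; 195; 180; 72; 169; 190; 91; 149; 159; 1; 33; 139; 107; 84; 111; 214; 137; 201; 50; 65; 182; 22; 5; 188; 154; 222; 157; 45; 167; 140; 78; 89; 217; 210; 207; 12; 53; 192; 118; 23; 172; 120; 153; 146; 160; 70; 165; 97; 7; 88; 108; 38; 205; 200; 178; 196; 184; 18; 131; 122; 90; 3; 158; 42; 30; 96; 83; 229; 112; 213; 208; 28; 174; 62; 4; 19; 170; 191; 93; 147; 58; 46; 163; 101; 102; 233; 216; 16; 206; 203; 52; 64; 181; 77; 168; 124; 92; 227; 54; 71; 9; 100; 82; 86; 219; 212; 132; 199; 177; 61; 115; 75; 128; 10; 95; 144; 161; 68; 166; 141; 81; 230; 218; 39; 134; 29; 2; 63; 183; 21; 130; 121; 152; 148; 57; 69; 35; 142; 105; 11; 221; 215; 209; 26; 176; 193; 185; 73; 127; 186; 151; 224; 13; 66; 164; 98; 103; 231; 109; 211; 136; 27; 49; 197; 114; 14; 129; 123; 94; 226; 56; 43; 162; 143; 106; 87; 113; 37; 6; 24; 179; 60; 117; 76; 173; 125; 150; 223; 156; 47; 32; 0; 104; 228; 220; 36; 133; 202; 175; 194; 116; 20; 171; 189]; [:: 0; 202; 42; 125; 143; 80; 56; 133;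 197; 98; 166; 88; 112; 10; 73; 29; 219; 151; 148; 182; 46; 107; 138; 116; 55; 18; 2; 101; 69; 189; 113; 93; 131; 25; 213; 154; 171; 181; 61; 7; 139; 83; 176; 21; 192; 52; 71; 89; 108; 37; 129; 207; 17; 152; 146; 200; 60; 102; 224; 79; 54; 20; 157; 48; 167; 12; 109; 90; 75; 205; 212; 230; 144; 180; 65; 120; 223; 118; 16; 23; 193; 100; 164; 84; 34; 94; 127; 208; 218; 229; 169; 11; 64; 103; 141; 119; 59; 136; 194; 51; 165; 188; 30; 36; 13; 206; 215; 155; 168; 185; 43; 104; 222; 114; 177; 132; 156; 9; 162; 85; 111; 39; 130; 28; 211; 228; 173; 201; 47; 123; 0; 115; 58; 22; 159; 50; 66; 86; 33; 38; 74; 24; 220; 14; 172; 184; 62; 121; 227; 82; 57; 135; 158; 97; 68; 190; 15; 41; 128; 209; 221; 233; 149; 183; 44; 124; 140; 78; 175; 6; 161; 53; 163; 191; 32; 91; 126; 27; 216; 150; 147; 199; 1; 122; 226; 117; 174; 134; 195; 49; 70; 186; 110; 95; 76; 8; 217; 232; 170; 198; 45; 105; 225; 81; 179; 19; 196; 96; 3; 187; 35; 40; 77; 26; 214; 231; 145; 203; 63; 106; 142; 4; 178; 137; 160; 99; 67; 87; 31; 92; 72; 204; 210; 153]; [:: 0; 189; 171; 20; 116; 194; 175; 202; 133; 36; 220; 228; 104; 0; 32; 47; 156; 223; 150; 125; 173; 76; 117; 60; 179; 24; 6; 37; 113; 87; 106; 143; 162; 43; 56; 226; 94; 123; 129; 14;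 114; 197; 49; 27; 136; 211; 109; 231; 103; 98; 164; 66; 13; 224; 151; 186; 127; 73; 185; 193; 176; 26; 209; 215; 221; 11; 105; 142; 35; 69; 57; 148; 152; 121; 130; 21; 183; 63; 2; 29; 134; 39; 218; 230; 81; 141; 166; 68; 161; 144; 95; 10; 128; 75; 115; 61; 177; 199; 132; 212; 219; 86; 82; 100; 9; 71; 54; 227; 92; 124; 168; 77; 181; 64; 52; 203; 206; 16; 216; 233; 102; 101; 163; 46; 58; 147; 93; 191; 170; 19; 4; 62; 174; 28; 208; 213; 112; 229; 83; 96; 30; 42; 158; 3; 90; 122; 131; 18; 184; 196; 178; 200; 205; 38; 108; 88; 7; 97; 165; 70; 160; 146; 153; 120; 172; 23; 118; 192; 53; 12; 207; 210; 217; 89; 78; 140; 167; 45; 157; 222; 154; 188; 5; 22; 182; 65; 50; 201; 137; 214; 111; 84; 107; 139; 33; 1; 159; 149; 91; 190; 169; 72; 180; 195; 51; 25; 135; 40; 17; 85; 79; 99; 31; 44; 55; 145; 155; 187; 126; 74; 119; 8; 48; 198; 204; 41; 110; 232; 80; 138; 34; 67; 59; 225]; [:: 0; 0; 0; 0; 0; 0; 0; 0; 0; 0; 0; 0; 0; 0; 0; 0; 0; 0; 0; 0; 0; 0; 0; 0; 0; 0; 0; 0; 0; 0; 0; 0; 0; 0; 0; 0; 0; 0; 0; 0; 0; 0; 0; 0; 0; 0; 0; 0; 0; 0; 0; 0; 0; 0; 0; 0; 0; 0; 0; 0; 0; 0; 0; 0; 0; 0; 0; 0; 0; 0; 0; 0;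 0; 0; 0; 0; 0; 0; 0; 0; 0; 0; 0; 0; 0; 0; 0; 0; 0; 0; 0; 0; 0; 0; 0; 0; 0; 0; 0; 0; 0; 0; 0; 0; 0; 0; 0; 0; 0; 0; 0; 0; 0; 0; 0; 0; 0; 0; 0; 0; 0; 0; 0; 0; 0; 0; 0; 0; 0; 0; 0; 0; 0; 0; 0; 0; 0; 0; 0; 0; 0; 0; 0; 0; 0; 0; 0; 0; 0; 0; 0; 0; 0; 0; 0; 0; 0; 0; 0; 0; 0; 0; 0; 0; 0; 0; 0; 0; 0; 0; 0; 0; 0; 0; 0; 0; 0; 0; 0; 0; 0; 0; 0; 0; 0; 0; 0; 0; 0; 0; 0; 0; 0; 0; 0; 0; 0; 0; 0; 0; 0; 0; 0; 0; 0; 0; 0; 0; 0; 0; 0; 0; 0; 0; 0; 0; 0; 0; 0; 0; 0; 0; 0; 0; 0; 0; 0; 0; 0; 0; 0; 0; 0; 0]].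
Lemma good234 : goodb 232 L234 W234. Proof. vm_compute. reflexivity. Qed.
Definition L306 : seq (seq nat) := [:: [:: 119; 204; 68; 255; 34; 0; 85; 51; 17; 170; 136; 221; 289; 272; 102; 187; 238; 153; 178; 16; 304; 268; 106; 70; 52; 196; 78; 258; 6; 114; 294; 96; 150; 24; 38; 110; 254; 236; 2; 290; 128; 200; 75; 201; 147; 39; 165; 57; 3; 129; 292; 40; 148; 58; 112; 22; 130; 184; 299; 173; 227; 29; 209; 11; 65; 245; 125; 233; 143; 269; 71; 197; 107; 215; 83; 47; 281; 137; 101; 263; 191; 155; 166; 94; 256; 274; 202; 220; 76; 4; 88; 142; 250; 160; 214; 124; 232; 286; 152; 134; 98; 26; 8; 242; 206; 188; 10; 190; 244; 46; 226; 28; 82; 262; 222; 240; 276; 42; 60; 132; 168; 186; 203; 185; 149; 77; 59; 293; 257; 239; 208; 280; 118; 100; 172; 154; 298; 64; 105; 159; 267; 177; 231; 141; 249; 303; 145; 1; 19; 55; 217; 253; 271; 127; 43; 205; 223; 259; 115; 151; 169; 25; 264; 120; 138; 174; 30; 66; 84; 246; 175; 265; 139; 193; 283; 31; 211; 301; 180; 54; 108; 216; 90; 198; 252; 126; 179; 35; 53; 89; 251; 287; 305; 161; 133; 79; 277; 61; 7; 97; 295; 241; 195; 33; 15; 285; 123; 87; 69; 213; 228; 48; 300; 192; 12; 210; 156; 282; 91; 199; 109; 235; 37; 163; 73; 181; 81; 9; 171; 189; 117; 135; 297; 225; 121; 157; 229; 67; 103; 247; 13; 49; 113; 5; 95; 275;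 167; 41; 131; 23; 212; 50; 32; 302; 140; 104; 86; 230; 164; 56; 146; 20; 218; 92; 182; 74; 237; 219; 183; 111; 93; 21; 291; 273; 44; 224; 278; 80; 260; 62; 116; 296; 270; 234; 162; 18; 288; 144; 72; 36; 243; 27; 207; 261; 45; 99; 279; 63; 194; 14; 266; 158; 284; 176; 122; 248]; [:: 272; 119; 34; 68; 17; 187; 102; 204; 153; 255; 238; 85; 221; 0; 170; 136; 289; 51; 21; 93; 237; 219; 291; 273; 111; 183; 236; 200; 128; 290; 254; 110; 38; 2; 80; 296; 116; 62; 278; 224; 44; 260; 223; 259; 25; 169; 205; 43; 115; 151; 33; 15; 285; 213; 195; 123; 87; 69; 14; 266; 158; 248; 194; 284; 176; 122; 271; 253; 217; 145; 127; 55; 19; 1; 244; 46; 262; 82; 190; 10; 226; 28; 134; 98; 26; 188; 152; 8; 242; 206; 161; 305; 287; 251; 89; 53; 35; 179; 249; 141; 231; 105; 303; 177; 267; 159; 73; 163; 37; 91; 181; 235; 109; 199; 225; 297; 135; 117; 189; 171; 9; 81; 64; 298; 154; 172; 100; 118; 280; 208; 257; 293; 59; 203; 239; 77; 149; 185; 130; 22; 112; 292; 184; 58; 148; 40; 283; 175; 265; 139; 31; 211; 301; 193; 108; 216; 126; 252; 54; 180; 90; 198; 288; 270; 234; 162; 144; 72; 36; 18; 75; 201; 147; 39; 165; 57; 3; 129; 286; 232; 124; 214; 160; 250; 142; 88; 243; 27; 207; 261; 45; 99; 279; 63; 97; 7; 133; 79; 295; 241; 61; 277; 233; 143; 269; 215;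 125; 71; 197; 107; 247; 103; 121; 157; 13; 49; 67; 229; 281; 137; 155; 191; 47; 83; 101; 263; 240; 276; 42; 186; 222; 60; 132; 168; 84; 66; 30; 264; 246; 174; 138; 120; 20; 74; 182; 92; 146; 56; 164; 218; 256; 274; 4; 76; 94; 166; 202; 220; 245; 65; 11; 209; 29; 227; 173; 299; 268; 196; 52; 70; 304; 16; 178; 106; 294; 78; 258; 6; 96; 150; 24; 114; 12; 228; 48; 300; 210; 156; 282; 192; 167; 113; 5; 95; 41; 131; 23; 275; 140; 212; 50; 32; 104; 86; 230; 302]; [:: 51; 170; 238; 85; 255; 153; 272; 0; 68; 17; 221; 204; 102; 34; 119; 289; 136; 187; 32; 302; 230; 86; 50; 212; 140; 104; 70; 106; 178; 16; 52; 196; 268; 304; 82; 28; 226; 10; 262; 46; 244; 190; 182; 92; 218; 164; 74; 20; 146; 56; 87; 123; 195; 33; 69; 213; 285; 15; 246; 84; 66; 30; 174; 138; 120; 264; 228; 48; 300; 192; 12; 210; 156; 282; 180; 54; 108; 216; 90; 198; 252; 126; 301; 211; 31; 283; 193; 139; 265; 175; 111; 273; 291; 21; 183; 219; 237; 93; 133; 79; 277; 61; 7; 97; 295; 241; 278; 80; 296; 116; 224; 44; 260; 62; 287; 251; 179; 35; 305; 161; 89; 53; 240; 276; 42; 186; 222; 60; 132; 168; 115; 43; 205; 223; 151; 169; 25; 259; 1; 19; 55; 127; 145; 217; 253; 271; 121; 157; 229; 67; 103; 247; 13; 49; 3; 57; 165; 75; 129; 39; 147; 201; 215; 107; 197; 71;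 269; 143; 233; 125; 220; 202; 166; 94; 76; 4; 274; 256; 292; 40; 148; 58; 112; 22; 130; 184; 24; 150; 96; 294; 114; 6; 258; 78; 208; 280; 118; 100; 172; 154; 298; 64; 101; 83; 47; 281; 263; 191; 155; 137; 122; 176; 284; 194; 248; 158; 266; 14; 279; 99; 45; 243; 63; 261; 207; 27; 163; 37; 91; 199; 73; 181; 235; 109; 214; 88; 142; 250; 124; 232; 286; 160; 245; 65; 11; 209; 29; 227; 173; 299; 189; 225; 297; 135; 171; 9; 81; 117; 290; 2; 38; 110; 128; 200; 236; 254; 95; 275; 23; 131; 5; 113; 167; 41; 293; 59; 203; 185; 257; 239; 77; 149; 288; 270; 234; 162; 144; 72; 36; 18; 231; 105; 159; 267; 141; 249; 303; 177; 152; 134; 98; 26; 8; 242; 206; 188]].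
Definition W306 : seq (seq nat) := [:: [:: 5; 147; 38; 48; 89; 243; 28; 198; 102; 227; 106; 63; 214; 240; 299; 204; 19; 8; 285; 148; 261; 271; 55; 249; 33; 161; 101; 291; 111; 61; 166; 175; 252; 203; 4; 187; 289; 222; 34; 45; 51; 247; 117; 154; 274; 294; 109; 75; 211; 241; 251; 7; 24; 188; 179; 149; 259; 47; 53; 126; 118; 197; 279; 297; 137; 64; 167; 237; 2; 208; 23; 70; 288; 224; 265; 42; 88; 125; 26; 195; 277; 226; 112; 74; 168; 6; 256; 207; 90; 189; 182; 218; 263; 270; 83; 244; 31; 199; 100; 295; 133; 78; 14; 238; 255; 138; 22; 72; 180; 220; 35; 269; 54; 242; 29; 158; 280; 230; 132; 0; 163; 234; 304; 206; 95; 66; 185; 153; 40; 49; 56; 248; 119; 194; 99; 231; 10; 77; 164; 172; 254; 143; 91; 68; 287; 146; 260; 44; 52; 124; 32; 159; 98; 17; 135; 81; 216; 235; 301; 139; 93; 193; 284; 223; 258; 46; 82; 246; 120; 160; 9; 228; 134; 59; 165; 170; 303; 141; 18; 186; 178; 225; 264; 268; 57; 123; 121; 15; 105; 229; 107; 80; 213; 173; 298; 202; 25; 71; 183; 219; 41; 43; 86; 122; 1; 155; 104; 292; 130; 62; 215; 176; 250; 209; 94; 73; 181; 150; 262; 267; 87; 11; 114; 156; 275; 233; 110; 60; 210; 236; 257; 142; 96; 67; 283; 221; 37; 266; 16; 129; 115; 201; 103; 290; 108; 65; 169; 239; 305; 144; 92; 190; 184; 151; 36; 3; 84; 128; 27;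 157; 278; 293; 113; 79; 162; 171; 300; 140; 21; 69; 282; 152; 13; 273; 85; 245; 116; 196; 276; 296; 131; 76; 217; 174; 302; 205; 97; 191; 286; 12; 39; 272; 50; 127; 30; 200; 281; 232; 136; 58; 212; 177; 253; 145; 20; 192]; [:: 13; 73; 33; 176; 252; 292; 277; 195; 87; 120; 79; 260; 282; 214; 58; 51; 271; 4; 169; 72; 242; 18; 139; 296; 280; 44; 84; 187; 81; 262; 236; 150; 301; 50; 2; 96; 168; 108; 32; 173; 145; 294; 228; 47; 40; 190; 75; 222; 284; 215; 300; 17; 268; 95; 158; 71; 247; 175; 143; 132; 231; 200; 37; 193; 122; 259; 235; 216; 3; 57; 269; 207; 167; 106; 243; 170; 253; 135; 275; 197; 34; 121; 77; 223; 234; 11; 303; 56; 185; 94; 160; 109; 245; 19; 254; 293; 278; 194; 83; 191; 126; 224; 6; 211; 302; 101; 273; 209; 154; 112; 31; 24; 140; 291; 281; 48; 36; 117; 127; 1; 241; 212; 65; 55; 180; 206; 156; 70; 28; 177; 138; 295; 232; 196; 82; 116; 15; 219; 240; 149; 298; 99; 184; 203; 166; 69; 246; 172; 144; 136; 279; 49; 86; 8; 124; 220; 287; 213; 60; 105; 182; 90; 165; 107; 248; 174; 255; 290; 233; 45; 14; 119; 125; 264; 239; 147; 64; 103; 272; 97; 159; 110; 244; 25; 142; 137; 229; 5; 85; 118; 78; 221; 289; 153; 62; 54; 267; 208; 161; 113; 27; 171; 256; 133; 7; 46; 89; 188; 129; 261; 286; 151; 299; 53; 181; 205; 155; 68; 249;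 21; 257; 12; 230; 42; 39; 114; 80; 263; 283; 217; 304; 100; 179; 202; 164; 111; 26; 20; 10; 134; 226; 199; 88; 186; 74; 258; 238; 210; 61; 98; 183; 93; 157; 67; 30; 9; 250; 130; 276; 43; 41; 189; 76; 225; 237; 148; 59; 104; 266; 204; 163; 66; 0; 23; 251; 297; 227; 201; 38; 192; 128; 218; 288; 146; 63; 52; 178; 92; 162; 16; 29; 22; 141; 131; 274; 198; 35; 115; 123; 265; 285; 152; 305; 102; 270; 91]; [:: 7; 138; 259; 154; 175; 270; 191; 102; 302; 255; 37; 244; 70; 152; 217; 57; 29; 9; 289; 139; 47; 93; 183; 268; 186; 136; 301; 225; 35; 246; 61; 84; 18; 53; 13; 117; 288; 227; 260; 159; 179; 273; 124; 131; 111; 220; 39; 204; 67; 153; 22; 0; 30; 121; 75; 140; 49; 155; 181; 275; 127; 101; 113; 222; 201; 243; 60; 149; 8; 54; 26; 165; 287; 230; 46; 157; 174; 280; 193; 99; 107; 256; 34; 203; 59; 3; 21; 50; 235; 120; 78; 228; 43; 97; 173; 266; 188; 103; 300; 219; 197; 202; 12; 150; 25; 291; 27; 163; 76; 233; 261; 90; 182; 271; 190; 130; 109; 257; 196; 14; 64; 146; 210; 51; 238; 169; 81; 141; 262; 158; 184; 269; 128; 98; 299; 253; 16; 209; 63; 87; 24; 294; 236; 167; 286; 142; 48; 160; 180; 281; 187; 134; 298; 5; 199; 208; 72; 147; 215; 292; 241; 119; 285; 226; 45; 156; 172; 272; 129; 135; 1; 254; 198; 248; 62; 89; 211; 297; 28;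 116; 74; 231; 42; 94; 185; 277; 125; 17; 305; 250; 41; 207; 69; 86; 213; 52; 31; 164; 79; 229; 263; 161; 171; 276; 11; 132; 304; 224; 194; 245; 71; 83; 23; 55; 234; 162; 77; 143; 44; 95; 170; 10; 126; 133; 110; 251; 36; 247; 66; 148; 20; 290; 239; 168; 284; 232; 264; 96; 2; 279; 122; 105; 303; 221; 40; 242; 58; 151; 214; 295; 237; 115; 80; 144; 265; 4; 177; 278; 192; 137; 112; 223; 38; 206; 65; 88; 216; 293; 32; 166; 283; 145; 6; 91; 176; 267; 123; 100; 106; 218; 195; 205; 73; 85; 212; 56; 240; 114; 282; 15; 258; 92; 178; 274; 189; 104; 108; 252; 200; 249; 68; 82; 19; 296; 33; 118]; [:: 0; 0; 0; 0; 0; 0; 0; 0; 0; 0; 0; 0; 0; 0; 0; 0; 0; 0; 0; 0; 0; 0; 0; 0; 0; 0; 0; 0; 0; 0; 0; 0; 0; 0; 0; 0; 0; 0; 0; 0; 0; 0; 0; 0; 0; 0; 0; 0; 0; 0; 0; 0; 0; 0; 0; 0; 0; 0; 0; 0; 0; 0; 0; 0; 0; 0; 0; 0; 0; 0; 0; 0; 0; 0; 0; 0; 0; 0; 0; 0; 0; 0; 0; 0; 0; 0; 0; 0; 0; 0; 0; 0; 0; 0; 0; 0; 0; 0; 0; 0; 0; 0; 0; 0; 0; 0; 0; 0; 0; 0; 0; 0; 0; 0; 0; 0; 0; 0; 0; 0; 0; 0; 0; 0; 0; 0; 0; 0; 0; 0; 0; 0; 0; 0; 0; 0; 0; 0; 0;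 0; 0; 0; 0; 0; 0; 0; 0; 0; 0; 0; 0; 0; 0; 0; 0; 0; 0; 0; 0; 0; 0; 0; 0; 0; 0; 0; 0; 0; 0; 0; 0; 0; 0; 0; 0; 0; 0; 0; 0; 0; 0; 0; 0; 0; 0; 0; 0; 0; 0; 0; 0; 0; 0; 0; 0; 0; 0; 0; 0; 0; 0; 0; 0; 0; 0; 0; 0; 0; 0; 0; 0; 0; 0; 0; 0; 0; 0; 0; 0; 0; 0; 0; 0; 0; 0; 0; 0; 0; 0; 0; 0; 0; 0; 0; 0; 0; 0; 0; 0; 0; 0; 0; 0; 0; 0; 0; 0; 0; 0; 0; 0; 0; 0; 0; 0; 0; 0; 0; 0; 0; 0; 0; 0; 0; 0; 0; 0; 0; 0; 0; 0; 0; 0; 0; 0; 0; 0; 0; 0; 0; 0; 0; 0; 0; 0; 0; 0; 0; 0; 0; 0; 0; 0; 0; 0; 0; 0; 0; 0; 0; 0; 0; 0; 0; 0; 0]; [:: 0; 75; 181; 229; 294; 271; 283; 157; 187; 264; 257; 102; 165; 25; 47; 62; 207; 4; 198; 76; 276; 246; 33; 267; 285; 51; 192; 107; 252; 105; 38; 129; 82; 63; 2; 213; 194; 234; 185; 227; 30; 269; 151; 56; 221; 110; 254; 142; 168; 21; 86; 15; 204; 217; 298; 77; 274; 233; 27; 132; 148; 158; 219; 113; 171; 103; 39; 20; 12; 60; 205; 95; 195; 239; 277; 231; 290; 135; 286; 160; 223; 265; 251; 143; 40; 1; 85; 61; 72; 216; 303; 235; 280; 242; 297; 270; 288; 156; 193;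 111; 170; 144; 17; 23; 89; 121; 209; 97; 299; 237; 184; 249; 32; 272; 284; 57; 218; 261; 174; 5; 35; 22; 44; 65; 69; 94; 301; 81; 179; 228; 29; 268; 147; 161; 189; 260; 11; 139; 36; 122; 88; 116; 71; 91; 196; 74; 275; 226; 26; 136; 289; 53; 188; 7; 173; 140; 163; 18; 42; 120; 66; 215; 199; 238; 278; 232; 293; 273; 146; 52; 8; 263; 177; 100; 37; 127; 45; 118; 208; 212; 302; 240; 281; 245; 28; 137; 150; 3; 191; 262; 256; 141; 166; 123; 48; 64; 203; 96; 304; 236; 178; 230; 292; 133; 10; 55; 190; 108; 176; 98; 164; 125; 87; 59; 73; 93; 300; 78; 279; 244; 291; 9; 149; 54; 225; 258; 253; 101; 169; 19; 84; 117; 68; 90; 200; 241; 182; 243; 14; 134; 153; 154; 186; 106; 255; 104; 41; 24; 43; 115; 70; 211; 305; 79; 183; 16; 296; 130; 282; 50; 220; 109; 250; 145; 34; 126; 46; 119; 202; 92; 201; 80; 13; 248; 295; 266; 152; 159; 224; 112; 175; 138; 162; 128; 49; 58; 67; 210; 197; 6; 180; 247; 31; 131; 287; 155; 222; 259; 172; 99; 167; 124; 83; 114; 206; 214]; [:: 0; 102; 110; 278; 205; 256; 151; 117; 26; 86; 41; 78; 290; 163; 179; 239; 212; 11; 289; 98; 19; 134; 160; 250; 146; 53; 33; 175; 36; 81; 249; 94; 145; 240; 1; 62; 288; 47; 106; 280; 154; 252; 298; 54; 230; 177; 38; 192; 292; 162; 141; 7; 215; 58; 259; 99; 22; 274; 156;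 70; 305; 118; 232; 171; 220; 79; 245; 166; 0; 235; 214; 129; 287; 49; 20; 276; 209; 69; 153; 120; 228; 87; 35; 193; 244; 4; 142; 236; 270; 59; 262; 46; 25; 130; 202; 255; 148; 116; 29; 173; 219; 189; 16; 165; 138; 195; 210; 124; 260; 43; 107; 137; 159; 257; 150; 55; 233; 88; 218; 6; 247; 169; 184; 237; 272; 128; 265; 100; 112; 279; 161; 251; 301; 121; 28; 89; 2; 190; 246; 93; 139; 198; 266; 126; 286; 103; 18; 281; 155; 68; 147; 56; 27; 9; 225; 186; 295; 168; 181; 196; 268; 60; 285; 48; 23; 275; 206; 253; 300; 57; 3; 82; 224; 76; 242; 91; 183; 201; 211; 63; 258; 45; 21; 133; 157; 67; 299; 12; 32; 83; 40; 187; 297; 97; 178; 241; 216; 125; 263; 42; 113; 277; 207; 66; 15; 50; 31; 174; 223; 74; 294; 95; 140; 234; 271; 123; 261; 104; 24; 132; 208; 10; 304; 51; 226; 84; 37; 77; 291; 167; 143; 194; 273; 127; 284; 44; 109; 131; 13; 73; 303; 114; 30; 176; 39; 80; 243; 164; 185; 199; 267; 64; 264; 105; 108; 8; 203; 72; 152; 52; 231; 170; 34; 188; 248; 92; 180; 197; 217; 122; 283; 101; 17; 136; 204; 254; 302; 119; 227; 172; 222; 191; 296; 90; 182; 238; 269; 65; 282; 14; 111; 135; 158; 71; 149; 115; 229; 85; 221; 75; 293; 96; 144; 200; 213; 61]; [:: 0; 214; 206; 114; 83; 124; 167; 99; 172; 259; 222; 155; 287; 131; 31; 247; 180; 6; 197;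 210; 67; 58; 49; 128; 162; 138; 175; 112; 224; 159; 152; 266; 295; 248; 13; 80; 201; 92; 202; 119; 46; 126; 34; 145; 250; 109; 220; 50; 282; 130; 296; 16; 183; 79; 305; 211; 70; 115; 43; 24; 41; 104; 255; 106; 186; 154; 153; 134; 14; 243; 182; 241; 200; 90; 68; 117; 84; 19; 169; 101; 253; 258; 225; 54; 149; 9; 291; 244; 279; 78; 300; 93; 73; 59; 87; 125; 164; 98; 176; 108; 190; 55; 10; 133; 292; 230; 178; 236; 304; 96; 203; 64; 48; 123; 166; 141; 256; 262; 191; 3; 150; 137; 28; 245; 281; 240; 302; 212; 208; 118; 45; 127; 37; 100; 177; 263; 8; 52; 146; 273; 293; 232; 278; 238; 199; 215; 66; 120; 42; 18; 163; 140; 173; 7; 188; 53; 289; 136; 26; 226; 275; 74; 196; 91; 71; 116; 88; 122; 36; 139; 11; 260; 189; 161; 147; 268; 29; 228; 179; 81; 301; 94; 69; 65; 44; 22; 35; 5; 174; 261; 218; 57; 284; 272; 32; 249; 184; 237; 299; 97; 209; 121; 89; 23; 17; 144; 170; 111; 193; 156; 288; 270; 297; 242; 280; 235; 303; 216; 72; 61; 85; 1; 40; 143; 251; 265; 223; 160; 286; 135; 290; 231; 277; 239; 195; 95; 205; 60; 12; 20; 39; 103; 171; 113; 219; 158; 148; 132; 27; 233; 274; 77; 298; 217; 204; 15; 86; 21; 168; 142; 254; 110; 221; 56; 151; 269; 30; 227; 185; 234; 194; 213; 2; 63; 82; 129; 38; 105; 252; 107; 192; 51; 285; 267; 33; 246;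 276; 76; 198; 4; 207; 62; 47; 25; 165; 102; 257; 264; 187; 157; 283; 271; 294; 229; 181; 75]; [:: 0; 0; 0; 0; 0; 0; 0; 0; 0; 0; 0; 0; 0; 0; 0; 0; 0; 0; 0; 0; 0; 0; 0; 0; 0; 0; 0; 0; 0; 0; 0; 0; 0; 0; 0; 0; 0; 0; 0; 0; 0; 0; 0; 0; 0; 0; 0; 0; 0; 0; 0; 0; 0; 0; 0; 0; 0; 0; 0; 0; 0; 0; 0; 0; 0; 0; 0; 0; 0; 0; 0; 0; 0; 0; 0; 0; 0; 0; 0; 0; 0; 0; 0; 0; 0; 0; 0; 0; 0; 0; 0; 0; 0; 0; 0; 0; 0; 0; 0; 0; 0; 0; 0; 0; 0; 0; 0; 0; 0; 0; 0; 0; 0; 0; 0; 0; 0; 0; 0; 0; 0; 0; 0; 0; 0; 0; 0; 0; 0; 0; 0; 0; 0; 0; 0; 0; 0; 0; 0; 0; 0; 0; 0; 0; 0; 0; 0; 0; 0; 0; 0; 0; 0; 0; 0; 0; 0; 0; 0; 0; 0; 0; 0; 0; 0; 0; 0; 0; 0; 0; 0; 0; 0; 0; 0; 0; 0; 0; 0; 0; 0; 0; 0; 0; 0; 0; 0; 0; 0; 0; 0; 0; 0; 0; 0; 0; 0; 0; 0; 0; 0; 0; 0; 0; 0; 0; 0; 0; 0; 0; 0; 0; 0; 0; 0; 0; 0; 0; 0; 0; 0; 0; 0; 0; 0; 0; 0; 0; 0; 0; 0; 0; 0; 0; 0; 0; 0; 0; 0; 0; 0; 0; 0; 0; 0; 0;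 0; 0; 0; 0; 0; 0; 0; 0; 0; 0; 0; 0; 0; 0; 0; 0; 0; 0; 0; 0; 0; 0; 0; 0; 0; 0; 0; 0; 0; 0; 0; 0; 0; 0; 0; 0; 0; 0; 0; 0; 0; 0; 0; 0; 0; 0; 0; 0; 0; 0; 0; 0; 0; 0; 0; 0; 0; 0; 0; 0]; [:: 0; 274; 218; 139; 33; 45; 301; 20; 291; 243; 119; 272; 184; 252; 237; 196; 38; 10; 147; 275; 62; 192; 123; 47; 304; 73; 296; 263; 121; 268; 282; 89; 91; 195; 5; 176; 148; 164; 219; 142; 129; 42; 208; 66; 101; 265; 115; 108; 182; 251; 90; 14; 37; 175; 57; 276; 64; 140; 127; 233; 203; 23; 99; 259; 74; 273; 286; 250; 4; 200; 41; 214; 149; 162; 58; 145; 32; 226; 299; 25; 103; 242; 117; 107; 287; 8; 97; 199; 134; 174; 52; 165; 60; 191; 27; 49; 302; 19; 297; 261; 78; 106; 2; 257; 96; 154; 40; 216; 56; 168; 220; 188; 124; 44; 305; 70; 98; 246; 79; 12; 284; 256; 238; 198; 136; 210; 54; 277; 223; 138; 122; 46; 202; 21; 293; 247; 6; 113; 285; 82; 95; 159; 130; 212; 153; 278; 63; 143; 128; 230; 303; 71; 292; 16; 76; 112; 181; 255; 240; 155; 132; 170; 146; 163; 65; 141; 26; 43; 206; 72; 17; 244; 77; 266; 289; 87; 234; 157; 39; 177; 53; 166; 59; 187; 126; 231; 207; 11; 295; 245; 118; 111; 179; 83; 236; 194; 36; 215; 51; 169; 224; 144; 30; 232; 7; 67;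 294; 262; 81; 271; 185; 85; 94; 201; 135; 217; 55; 279; 61; 186; 31; 0; 204; 68; 105; 249; 120; 267; 183; 254; 93; 158; 137; 211; 150; 167; 225; 190; 9; 227; 205; 22; 290; 264; 114; 269; 288; 253; 239; 160; 131; 173; 50; 280; 221; 1; 28; 228; 300; 69; 100; 258; 116; 110; 283; 86; 241; 156; 35; 213; 151; 281; 13; 189; 29; 48; 209; 24; 104; 260; 80; 109; 180; 88; 235; 197; 133; 172; 152; 3; 222; 193; 125; 229; 298; 18; 102; 248; 75; 270; 178; 84; 92; 161; 34; 171]; [:: 0; 61; 213; 200; 144; 96; 293; 75; 221; 85; 229; 115; 149; 71; 158; 135; 111; 14; 282; 65; 269; 238; 182; 90; 296; 191; 222; 172; 227; 119; 302; 254; 204; 136; 17; 101; 283; 122; 217; 197; 180; 92; 248; 188; 34; 170; 231; 52; 152; 72; 203; 8; 108; 105; 264; 64; 267; 199; 185; 164; 243; 80; 39; 176; 30; 114; 303; 73; 13; 131; 109; 44; 284; 127; 273; 194; 143; 167; 291; 77; 37; 84; 226; 51; 304; 10; 208; 132; 24; 104; 261; 123; 271; 234; 140; 95; 294; 74; 223; 174; 31; 50; 15; 66; 207; 277; 113; 42; 263; 125; 216; 241; 178; 97; 297; 187; 40; 83; 32; 12; 299; 67; 157; 133; 21; 45; 258; 63; 211; 201; 183; 91; 242; 76; 224; 82; 3; 57; 300; 253; 206; 275; 23; 48; 285; 60; 268; 196; 181; 168; 295; 186; 225; 9; 27; 56; 147; 68; 155; 281; 18; 103; 286; 126; 266; 198;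 139; 93; 246; 190; 2; 89; 28; 121; 301; 251; 161; 279; 112; 100; 265; 128; 272; 237; 184; 169; 247; 6; 218; 88; 233; 55; 150; 257; 159; 137; 107; 43; 260; 124; 210; 195; 138; 165; 16; 189; 219; 173; 29; 116; 148; 255; 202; 130; 25; 46; 262; 59; 270; 236; 142; 4; 244; 193; 35; 87; 228; 120; 153; 69; 209; 276; 20; 49; 287; 129; 214; 235; 0; 166; 245; 79; 220; 171; 232; 118; 305; 70; 156; 274; 22; 99; 259; 58; 215; 7; 141; 162; 292; 192; 38; 177; 230; 54; 298; 252; 154; 280; 106; 47; 288; 62; 1; 240; 145; 94; 249; 81; 36; 175; 33; 53; 146; 250; 160; 134; 19; 98; 289; 11; 212; 239; 179; 163; 290; 78; 41; 86; 26; 117; 151; 256; 205; 278; 110; 102]; [:: 0; 171; 34; 161; 92; 84; 178; 270; 75; 248; 102; 18; 298; 229; 125; 193; 222; 3; 152; 172; 133; 197; 235; 88; 180; 109; 80; 260; 104; 24; 209; 48; 29; 189; 13; 281; 151; 213; 35; 156; 241; 86; 283; 110; 116; 258; 100; 69; 300; 228; 28; 1; 221; 280; 50; 173; 131; 160; 239; 253; 288; 269; 114; 264; 290; 22; 205; 227; 9; 190; 225; 167; 150; 211; 137; 158; 93; 254; 183; 267; 120; 249; 105; 68; 204; 0; 31; 186; 61; 279; 55; 217; 135; 201; 94; 85; 185; 271; 81; 262; 294; 67; 7; 232; 30; 144; 224; 169; 51; 215; 36; 194; 236; 83; 179; 111; 118; 245; 295; 11; 207; 231; 126; 187; 59; 166;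 53; 177; 39; 157; 234; 87; 289; 266; 77; 244; 17; 72; 206; 43; 26; 141; 65; 163; 146; 170; 132; 155; 240; 255; 181; 112; 76; 16; 292; 71; 303; 230; 128; 143; 63; 278; 153; 212; 130; 159; 95; 82; 285; 113; 6; 247; 293; 21; 202; 46; 122; 138; 223; 277; 54; 210; 136; 198; 238; 256; 284; 12; 79; 246; 98; 70; 305; 44; 124; 188; 220; 168; 56; 216; 40; 154; 96; 257; 2; 106; 78; 261; 297; 19; 302; 49; 27; 191; 60; 165; 52; 174; 134; 199; 97; 8; 287; 107; 117; 242; 103; 25; 299; 226; 32; 145; 58; 162; 149; 214; 41; 200; 4; 250; 286; 273; 74; 259; 99; 23; 203; 233; 127; 140; 64; 276; 57; 175; 37; 14; 90; 251; 182; 108; 115; 265; 101; 66; 208; 42; 129; 142; 219; 164; 148; 176; 5; 195; 91; 89; 282; 268; 121; 263; 296; 73; 304; 47; 123; 192; 62; 275; 147; 10; 38; 196; 237; 252; 184; 272; 119; 243; 291; 20; 301; 45; 33; 139; 218; 274]; [:: 0; 0; 0; 0; 0; 0; 0; 0; 0; 0; 0; 0; 0; 0; 0; 0; 0; 0; 0; 0; 0; 0; 0; 0; 0; 0; 0; 0; 0; 0; 0; 0; 0; 0; 0; 0; 0; 0; 0; 0; 0; 0; 0; 0; 0; 0; 0; 0; 0; 0; 0; 0; 0; 0; 0; 0; 0; 0; 0; 0; 0; 0; 0; 0; 0; 0; 0; 0; 0; 0; 0; 0; 0; 0; 0; 0; 0; 0; 0; 0; 0; 0; 0; 0; 0; 0;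 0; 0; 0; 0; 0; 0; 0; 0; 0; 0; 0; 0; 0; 0; 0; 0; 0; 0; 0; 0; 0; 0; 0; 0; 0; 0; 0; 0; 0; 0; 0; 0; 0; 0; 0; 0; 0; 0; 0; 0; 0; 0; 0; 0; 0; 0; 0; 0; 0; 0; 0; 0; 0; 0; 0; 0; 0; 0; 0; 0; 0; 0; 0; 0; 0; 0; 0; 0; 0; 0; 0; 0; 0; 0; 0; 0; 0; 0; 0; 0; 0; 0; 0; 0; 0; 0; 0; 0; 0; 0; 0; 0; 0; 0; 0; 0; 0; 0; 0; 0; 0; 0; 0; 0; 0; 0; 0; 0; 0; 0; 0; 0; 0; 0; 0; 0; 0; 0; 0; 0; 0; 0; 0; 0; 0; 0; 0; 0; 0; 0; 0; 0; 0; 0; 0; 0; 0; 0; 0; 0; 0; 0; 0; 0; 0; 0; 0; 0; 0; 0; 0; 0; 0; 0; 0; 0; 0; 0; 0; 0; 0; 0; 0; 0; 0; 0; 0; 0; 0; 0; 0; 0; 0; 0; 0; 0; 0; 0; 0; 0; 0; 0; 0; 0; 0; 0; 0; 0; 0; 0; 0; 0; 0; 0; 0; 0; 0; 0; 0; 0; 0; 0; 0; 0; 0; 0; 0; 0; 0; 0; 0; 0; 0; 0; 0; 0; 0; 0; 0; 0]].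
Lemma good306 : goodb 304 L306 W306. Proof. vm_compute. reflexivity. Qed.
Definition L342 : seq (seq nat) := [:: [:: 209; 114; 266; 57; 304; 0; 247; 285; 323; 152; 190; 95; 19; 38; 228; 133; 76; 171; 21; 255; 219; 183; 147; 75; 3; 165; 129; 115; 61; 43; 25; 7; 313; 277; 187; 169; 36; 144; 180; 216; 252; 324; 54; 234; 270; 150; 258; 294; 330; 24; 96; 168; 6; 42; 302; 68; 104; 140; 176; 248; 320; 158; 194; 317; 299; 65; 173; 281; 155; 29; 227; 335; 199; 55; 235; 73; 253; 271; 289; 163; 1; 49; 139; 283; 85; 229; 175; 121; 157; 301; 208; 262; 280; 298; 316; 10; 46; 136; 154; 181; 325; 145; 307; 127; 109; 91; 217; 37; 72; 288; 18; 90; 162; 306; 108; 126; 198; 197; 161; 35; 251; 125; 215; 305; 17; 233; 256; 112; 292; 130; 310; 328; 4; 220; 58; 263; 83; 137; 191; 245; 11; 119; 47; 101; 274; 184; 40; 238; 94; 148; 202; 166; 22; 296; 44; 188; 332; 134; 80; 26; 62; 206; 254; 218; 92; 308; 182; 272; 20; 74; 290; 106; 196; 340; 142; 286; 232; 178; 214; 16; 113; 167; 185; 203; 221; 257; 293; 41; 59; 204; 132; 222; 312; 60; 240; 78; 186; 276; 118; 244; 172; 100; 28; 226; 82; 64; 334; 265; 319; 337; 13; 31; 67; 103; 193; 211; 282; 102; 156; 210; 264; 30; 138; 66; 120; 116; 8; 314; 278; 242; 170; 98; 260; 224; 111; 273; 327; 39; 93; 201; 309; 237; 291; 225; 45; 99;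 153; 207; 315; 81; 9; 63; 53; 269; 341; 71; 143; 287; 89; 107; 179; 189; 243; 261; 279; 297; 333; 27; 117; 135; 177; 195; 87; 321; 213; 339; 123; 267; 159; 249; 141; 105; 69; 33; 303; 231; 51; 15; 23; 149; 77; 5; 275; 131; 329; 311; 239; 84; 336; 192; 48; 246; 300; 12; 318; 174; 14; 284; 32; 122; 212; 50; 230; 338; 86; 223; 151; 241; 331; 79; 259; 97; 205; 295; 128; 56; 146; 236; 326; 164; 2; 110; 200; 70; 52; 160; 268; 34; 250; 124; 322; 88]; [:: 38; 209; 304; 266; 323; 133; 228; 114; 171; 57; 76; 247; 95; 0; 152; 190; 19; 285; 308; 92; 20; 290; 218; 74; 272; 254; 182; 67; 211; 31; 193; 13; 337; 319; 103; 265; 202; 238; 22; 148; 274; 184; 94; 40; 166; 146; 128; 236; 2; 110; 326; 200; 56; 164; 15; 231; 303; 33; 105; 249; 51; 69; 141; 206; 26; 80; 134; 188; 296; 62; 332; 44; 281; 155; 227; 299; 29; 173; 317; 335; 65; 237; 93; 273; 111; 291; 309; 327; 201; 39; 175; 301; 229; 157; 85; 283; 139; 121; 49; 255; 165; 21; 219; 75; 129; 183; 147; 3; 117; 297; 243; 189; 135; 27; 261; 333; 279; 262; 136; 208; 280; 10; 154; 298; 316; 46; 68; 158; 302; 104; 248; 194; 140; 176; 320; 72; 288; 18; 90; 162; 306; 108; 126; 198; 234; 252; 144; 36; 270; 54; 180; 324; 216; 70; 52; 160; 268; 34; 250; 124; 322; 88; 230; 122; 86; 50; 14; 284; 212; 32;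 338; 226; 334; 28; 64; 100; 172; 244; 82; 118; 83; 47; 263; 137; 11; 101; 191; 245; 119; 150; 258; 294; 330; 24; 96; 168; 6; 42; 311; 275; 149; 23; 239; 329; 77; 131; 5; 256; 112; 292; 130; 310; 328; 4; 220; 58; 63; 81; 315; 207; 99; 225; 9; 153; 45; 222; 204; 312; 78; 186; 60; 276; 132; 240; 235; 199; 73; 289; 163; 253; 1; 55; 271; 242; 170; 260; 8; 98; 278; 116; 224; 314; 174; 12; 300; 246; 192; 84; 318; 48; 336; 102; 66; 282; 156; 30; 120; 210; 264; 138; 145; 181; 307; 91; 217; 127; 37; 325; 109; 143; 287; 107; 269; 89; 71; 53; 179; 341; 214; 286; 196; 106; 16; 178; 340; 232; 142; 17; 125; 161; 197; 233; 305; 35; 215; 251; 321; 87; 123; 159; 195; 267; 339; 177; 213; 115; 61; 43; 25; 7; 313; 277; 187; 169; 79; 259; 205; 151; 97; 331; 223; 295; 241; 113; 167; 185; 203; 221; 257; 293; 41; 59]; [:: 285; 152; 76; 247; 57; 171; 38; 0; 266; 323; 95; 114; 228; 304; 209; 19; 190; 133; 139; 157; 49; 283; 175; 301; 85; 229; 121; 306; 198; 162; 126; 90; 18; 288; 108; 72; 213; 339; 267; 195; 123; 321; 177; 159; 87; 185; 113; 203; 293; 41; 221; 59; 167; 257; 230; 122; 86; 50; 14; 284; 212; 32; 338; 20; 308; 290; 272; 254; 218; 182; 92; 74; 158; 176; 68; 302; 194; 320; 104; 248; 140; 219; 21; 183; 3; 165; 147; 129; 255; 75; 273; 237; 111; 327;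 201; 291; 39; 93; 309; 43; 115; 25; 277; 187; 7; 169; 61; 313; 142; 340; 178; 16; 196; 214; 232; 106; 286; 271; 1; 253; 163; 73; 235; 55; 289; 199; 60; 240; 186; 132; 78; 312; 204; 276; 222; 56; 110; 128; 146; 164; 200; 236; 326; 2; 261; 189; 279; 27; 117; 297; 135; 243; 333; 116; 8; 314; 278; 242; 170; 98; 260; 224; 208; 262; 280; 298; 316; 10; 46; 136; 154; 23; 149; 77; 5; 275; 131; 329; 311; 239; 29; 173; 335; 155; 317; 299; 281; 65; 227; 54; 216; 270; 324; 36; 144; 252; 180; 234; 13; 337; 103; 211; 319; 193; 67; 265; 31; 172; 118; 100; 82; 64; 28; 334; 244; 226; 11; 101; 245; 47; 191; 137; 83; 119; 263; 300; 174; 246; 318; 48; 192; 336; 12; 84; 287; 179; 143; 107; 71; 341; 269; 89; 53; 292; 256; 130; 4; 220; 310; 58; 112; 328; 207; 315; 9; 45; 81; 153; 225; 63; 99; 295; 97; 259; 79; 241; 223; 205; 331; 151; 70; 52; 160; 268; 34; 250; 124; 322; 88; 184; 166; 274; 40; 148; 22; 238; 94; 202; 161; 17; 197; 35; 215; 233; 251; 125; 305; 249; 141; 105; 69; 33; 303; 231; 51; 15; 127; 109; 217; 325; 91; 307; 181; 37; 145; 332; 188; 26; 206; 44; 62; 80; 296; 134; 6; 24; 258; 150; 42; 168; 294; 96; 330; 102; 66; 282; 156; 30; 120; 210; 264; 138]].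
Definition W342 : seq (seq nat) := [:: [:: 5; 80; 330; 24; 132; 291; 52; 31; 226; 250; 95; 140; 303; 210; 306; 287; 179; 124; 110; 12; 168; 18; 152; 288; 49; 30; 159; 267; 202; 69; 221; 211; 308; 283; 337; 119; 36; 107; 13; 237; 146; 187; 53; 29; 154; 244; 96; 142; 300; 81; 311; 286; 334; 252; 42; 73; 325; 3; 134; 188; 193; 28; 160; 251; 205; 65; 223; 212; 55; 282; 333; 255; 108; 75; 169; 23; 16; 290; 195; 319; 158; 249; 204; 136; 297; 84; 314; 272; 341; 258; 111; 105; 164; 238; 148; 11; 50; 321; 231; 245; 201; 143; 217; 213; 56; 281; 171; 259; 114; 104; 331; 234; 127; 180; 1; 27; 225; 268; 198; 141; 224; 87; 309; 276; 339; 121; 115; 103; 324; 26; 129; 293; 190; 15; 157; 269; 97; 137; 222; 82; 57; 280; 174; 256; 37; 101; 326; 22; 149; 289; 45; 316; 9; 246; 98; 68; 218; 88; 61; 278; 335; 118; 112; 79; 329; 25; 151; 181; 51; 35; 230; 17; 200; 66; 305; 86; 58; 270; 177; 260; 38; 99; 166; 21; 145; 182; 196; 34; 155; 261; 10; 138; 299; 214; 62; 271; 172; 117; 116; 72; 332; 239; 150; 183; 189; 322; 161; 247; 90; 0; 219; 215; 310; 274; 178; 122; 39; 106; 163; 20; 133; 184; 191; 315; 233; 243; 203; 70; 14; 85; 312; 285; 176; 125; 43; 74; 327; 241; 147; 296; 194; 317; 229; 262; 199; 139; 301; 6; 59; 279; 338; 120; 40; 76; 162; 19; 126; 185; 46;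 320; 232; 263; 91; 135; 220; 207; 2; 277; 336; 253; 44; 77; 167; 235; 144; 292; 197; 33; 228; 264; 92; 67; 216; 83; 307; 7; 175; 257; 109; 78; 170; 242; 128; 186; 47; 323; 153; 265; 93; 64; 302; 89; 54; 284; 4; 123; 113; 102; 165; 240; 130; 295; 192; 32; 227; 248; 94; 63; 304; 208; 60; 273; 340; 8; 41; 100; 328; 236; 131; 294; 48; 318; 156; 266; 206; 71; 298; 209; 313; 275; 173; 254]; [:: 13; 240; 48; 107; 213; 206; 196; 319; 246; 222; 121; 184; 253; 31; 166; 54; 292; 297; 137; 16; 20; 101; 38; 201; 193; 318; 64; 113; 173; 76; 265; 29; 169; 57; 157; 303; 147; 276; 0; 89; 43; 340; 197; 317; 71; 224; 125; 181; 259; 98; 165; 60; 154; 285; 149; 241; 52; 9; 215; 341; 230; 316; 69; 216; 174; 80; 262; 27; 126; 61; 153; 284; 135; 236; 23; 103; 10; 204; 228; 324; 65; 217; 178; 180; 257; 94; 164; 307; 161; 283; 138; 273; 19; 82; 42; 12; 194; 328; 247; 220; 175; 185; 261; 34; 129; 58; 291; 281; 141; 278; 49; 84; 208; 333; 7; 315; 249; 108; 179; 188; 266; 97; 163; 308; 159; 298; 142; 275; 46; 104; 210; 205; 232; 5; 66; 112; 118; 183; 269; 96; 132; 62; 296; 279; 146; 270; 45; 106; 39; 200; 189; 327; 14; 223; 122; 73; 264; 93; 127; 309; 155; 299; 139; 238; 53; 100; 44; 334; 195; 323; 244; 8; 176; 77; 252; 90; 133; 313; 293; 286; 150; 271; 26;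 105; 41; 335; 229; 322; 67; 111; 15; 186; 256; 30; 131; 310; 290; 300; 143; 235; 51; 88; 36; 336; 226; 326; 63; 219; 119; 1; 267; 28; 168; 314; 288; 304; 152; 274; 22; 102; 214; 337; 225; 330; 250; 221; 171; 74; 6; 92; 162; 55; 295; 301; 144; 234; 47; 81; 37; 202; 233; 332; 243; 110; 177; 187; 255; 11; 130; 59; 158; 305; 145; 239; 25; 99; 207; 338; 190; 325; 245; 114; 117; 182; 268; 35; 3; 311; 156; 282; 148; 242; 24; 83; 40; 199; 231; 321; 248; 116; 120; 72; 263; 95; 167; 17; 289; 280; 136; 237; 21; 85; 209; 339; 191; 331; 68; 109; 123; 75; 254; 91; 128; 56; 2; 302; 140; 272; 18; 86; 211; 198; 227; 320; 251; 218; 124; 78; 258; 33; 134; 306; 160; 4; 151; 277; 50; 87; 212; 203; 192; 329; 70; 115; 172; 79; 260; 32; 170; 312; 294; 287]; [:: 7; 118; 143; 84; 246; 174; 324; 104; 154; 254; 167; 216; 232; 198; 58; 305; 111; 289; 32; 15; 63; 82; 284; 171; 325; 101; 317; 147; 212; 180; 337; 206; 61; 301; 274; 291; 193; 313; 6; 96; 282; 49; 328; 99; 319; 255; 168; 219; 229; 20; 57; 304; 271; 242; 189; 123; 135; 4; 249; 51; 126; 106; 320; 259; 211; 187; 334; 204; 74; 300; 270; 238; 35; 121; 71; 89; 2; 173; 130; 264; 321; 256; 210; 222; 233; 24; 56; 44; 278; 241; 31; 310; 70; 97; 286; 10; 331; 262; 159; 260; 209; 217; 333; 200; 78; 299; 115;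 237; 34; 307; 136; 92; 250; 46; 11; 100; 153; 148; 208; 223; 338; 26; 55; 40; 276; 295; 30; 306; 137; 87; 245; 176; 129; 17; 323; 150; 169; 221; 341; 18; 80; 298; 108; 236; 194; 314; 138; 86; 283; 172; 327; 269; 1; 257; 170; 183; 336; 19; 72; 43; 272; 288; 29; 120; 139; 85; 280; 52; 329; 105; 158; 5; 207; 181; 226; 22; 73; 42; 110; 235; 196; 312; 69; 83; 279; 45; 128; 103; 316; 145; 16; 220; 230; 203; 76; 39; 112; 290; 28; 125; 140; 94; 287; 47; 132; 267; 318; 252; 162; 14; 339; 201; 60; 36; 113; 292; 190; 308; 68; 81; 247; 50; 134; 266; 161; 258; 215; 188; 12; 25; 54; 303; 114; 293; 197; 122; 141; 91; 285; 179; 127; 265; 157; 151; 214; 218; 227; 3; 79; 297; 275; 294; 195; 119; 67; 88; 244; 53; 326; 263; 160; 144; 163; 224; 340; 205; 8; 38; 273; 240; 191; 117; 66; 90; 281; 175; 133; 102; 156; 146; 164; 186; 335; 21; 59; 0; 116; 234; 33; 124; 65; 95; 243; 48; 330; 261; 322; 149; 165; 185; 225; 23; 75; 302; 13; 296; 27; 311; 64; 98; 248; 178; 131; 107; 155; 253; 166; 184; 228; 202; 77; 41; 277; 9; 192; 309; 142; 93; 251; 177; 332; 268; 315; 152; 213; 182; 231; 199; 62; 37; 109; 239]; [:: 0; 0; 0; 0; 0; 0; 0; 0; 0; 0; 0; 0; 0; 0; 0; 0; 0; 0; 0; 0; 0; 0; 0; 0; 0; 0; 0; 0; 0; 0; 0;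 0; 0; 0; 0; 0; 0; 0; 0; 0; 0; 0; 0; 0; 0; 0; 0; 0; 0; 0; 0; 0; 0; 0; 0; 0; 0; 0; 0; 0; 0; 0; 0; 0; 0; 0; 0; 0; 0; 0; 0; 0; 0; 0; 0; 0; 0; 0; 0; 0; 0; 0; 0; 0; 0; 0; 0; 0; 0; 0; 0; 0; 0; 0; 0; 0; 0; 0; 0; 0; 0; 0; 0; 0; 0; 0; 0; 0; 0; 0; 0; 0; 0; 0; 0; 0; 0; 0; 0; 0; 0; 0; 0; 0; 0; 0; 0; 0; 0; 0; 0; 0; 0; 0; 0; 0; 0; 0; 0; 0; 0; 0; 0; 0; 0; 0; 0; 0; 0; 0; 0; 0; 0; 0; 0; 0; 0; 0; 0; 0; 0; 0; 0; 0; 0; 0; 0; 0; 0; 0; 0; 0; 0; 0; 0; 0; 0; 0; 0; 0; 0; 0; 0; 0; 0; 0; 0; 0; 0; 0; 0; 0; 0; 0; 0; 0; 0; 0; 0; 0; 0; 0; 0; 0; 0; 0; 0; 0; 0; 0; 0; 0; 0; 0; 0; 0; 0; 0; 0; 0; 0; 0; 0; 0; 0; 0; 0; 0; 0; 0; 0; 0; 0; 0; 0; 0; 0; 0; 0; 0; 0; 0; 0; 0; 0; 0; 0; 0; 0; 0; 0; 0; 0; 0; 0; 0; 0; 0; 0; 0; 0; 0; 0; 0; 0; 0; 0; 0; 0; 0; 0; 0; 0; 0; 0; 0; 0; 0; 0; 0; 0; 0; 0; 0; 0; 0; 0; 0; 0; 0; 0; 0; 0; 0; 0; 0; 0; 0;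 0; 0; 0; 0; 0; 0; 0; 0; 0; 0; 0; 0; 0; 0; 0; 0; 0; 0; 0; 0; 0; 0; 0; 0; 0; 0; 0; 0; 0; 0; 0; 0; 0; 0; 0; 0; 0; 0; 0; 0; 0; 0; 0; 0]; [:: 0; 23; 227; 219; 45; 204; 164; 123; 74; 207; 83; 141; 29; 301; 271; 97; 287; 310; 322; 6; 242; 217; 150; 200; 162; 118; 129; 112; 155; 341; 180; 299; 270; 90; 107; 306; 193; 248; 13; 66; 144; 254; 169; 124; 133; 209; 82; 140; 27; 324; 278; 92; 103; 62; 189; 18; 229; 16; 47; 259; 176; 122; 130; 211; 156; 336; 183; 297; 39; 95; 106; 58; 319; 24; 235; 224; 14; 201; 174; 295; 134; 212; 160; 139; 34; 327; 276; 261; 102; 61; 316; 251; 237; 67; 149; 9; 163; 296; 77; 213; 157; 138; 186; 304; 44; 98; 279; 57; 315; 247; 230; 63; 50; 258; 10; 121; 75; 110; 161; 137; 181; 330; 272; 264; 101; 311; 323; 250; 232; 222; 46; 202; 178; 3; 131; 115; 87; 136; 187; 325; 41; 93; 282; 56; 194; 246; 226; 221; 152; 198; 168; 288; 8; 215; 81; 337; 185; 331; 38; 267; 100; 313; 321; 19; 231; 220; 148; 255; 166; 119; 79; 7; 158; 339; 30; 329; 36; 262; 285; 55; 196; 245; 241; 218; 151; 260; 175; 125; 126; 114; 11; 135; 28; 300; 43; 268; 280; 307; 317; 20; 228; 68; 147; 257; 172; 289; 132; 208; 86; 5; 184; 298; 275; 266; 286; 314; 190; 244; 234; 216; 53; 252;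 171; 290; 76; 210; 153; 334; 17; 328; 273; 94; 284; 312; 197; 21; 225; 70; 146; 203; 179; 291; 73; 111; 159; 143; 35; 1; 37; 96; 105; 308; 195; 25; 236; 223; 49; 253; 165; 292; 72; 116; 89; 142; 182; 305; 12; 265; 99; 60; 191; 22; 238; 64; 145; 205; 177; 117; 80; 113; 85; 340; 188; 326; 277; 15; 283; 54; 320; 26; 239; 71; 52; 256; 170; 293; 127; 108; 88; 333; 33; 332; 42; 91; 2; 309; 318; 249; 240; 69; 51; 199; 173; 120; 78; 214; 84; 335; 32; 303; 40; 263; 104; 4; 192; 243; 233; 65; 48; 206; 167; 294; 128; 109; 154; 338; 31; 302; 274; 269; 281; 59]; [:: 0; 217; 263; 41; 337; 248; 196; 96; 26; 137; 165; 175; 186; 144; 331; 204; 131; 321; 56; 14; 115; 39; 238; 249; 193; 91; 255; 67; 86; 282; 102; 152; 325; 203; 125; 319; 154; 48; 17; 212; 240; 72; 197; 97; 259; 138; 162; 172; 183; 312; 330; 202; 121; 273; 156; 222; 265; 8; 340; 76; 292; 95; 256; 142; 85; 279; 107; 150; 227; 200; 124; 278; 54; 220; 111; 43; 13; 251; 294; 34; 260; 139; 84; 171; 180; 311; 327; 299; 120; 275; 57; 47; 113; 207; 235; 10; 194; 35; 19; 143; 83; 176; 104; 146; 231; 198; 128; 270; 60; 51; 266; 213; 336; 75; 15; 94; 23; 65; 82; 179; 101; 310; 324; 303; 119; 318; 61; 53; 268; 40; 338; 244; 289; 12; 257; 70; 170; 174; 99; 309; 233; 205; 132; 271; 160; 46;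 262; 37; 241; 246; 189; 27; 3; 140; 164; 287; 106; 308; 225; 305; 118; 323; 58; 219; 267; 36; 234; 74; 195; 92; 20; 9; 81; 281; 188; 307; 226; 297; 134; 274; 153; 52; 110; 44; 236; 78; 295; 98; 252; 69; 2; 177; 182; 149; 229; 298; 126; 320; 62; 224; 264; 208; 239; 80; 288; 28; 258; 135; 166; 6; 100; 147; 332; 301; 127; 317; 155; 50; 114; 42; 335; 73; 290; 29; 18; 141; 89; 283; 16; 306; 326; 201; 130; 315; 157; 221; 261; 209; 242; 250; 293; 30; 21; 66; 88; 178; 184; 4; 232; 199; 123; 322; 158; 218; 116; 38; 339; 79; 190; 31; 24; 71; 167; 173; 105; 151; 0; 304; 117; 272; 159; 216; 108; 210; 237; 243; 296; 90; 25; 68; 169; 284; 103; 314; 328; 7; 133; 277; 55; 223; 109; 214; 341; 77; 191; 32; 253; 63; 163; 286; 185; 313; 228; 206; 1; 316; 59; 45; 112; 211; 333; 245; 291; 93; 22; 136; 168; 280; 187; 148; 230; 300; 122; 11; 161; 49; 269; 215; 334; 247; 192; 33; 254; 64; 87; 285; 181; 145; 329; 302; 129; 276]; [:: 0; 59; 281; 269; 274; 302; 31; 338; 154; 109; 128; 294; 167; 206; 48; 65; 233; 243; 192; 4; 104; 263; 40; 303; 32; 335; 84; 214; 78; 120; 173; 199; 51; 69; 240; 249; 318; 309; 2; 91; 42; 332; 33; 333; 88; 108; 127; 293; 170; 256; 52; 71; 239; 26; 320; 54; 283; 15; 277; 326; 188; 340; 85; 113; 80; 117; 177; 205; 145; 64;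 238; 22; 191; 60; 99; 265; 12; 305; 182; 142; 89; 116; 72; 292; 165; 253; 49; 223; 236; 25; 195; 308; 105; 96; 37; 1; 35; 143; 159; 111; 73; 291; 179; 203; 146; 70; 225; 21; 197; 312; 284; 94; 273; 328; 17; 334; 153; 210; 76; 290; 171; 252; 53; 216; 234; 244; 190; 314; 286; 266; 275; 298; 184; 5; 86; 208; 132; 289; 172; 257; 147; 68; 228; 20; 317; 307; 280; 268; 43; 300; 28; 135; 11; 114; 126; 125; 175; 260; 151; 218; 241; 245; 196; 55; 285; 262; 36; 329; 30; 339; 158; 7; 79; 119; 166; 255; 148; 220; 231; 19; 321; 313; 100; 267; 38; 331; 185; 337; 81; 215; 8; 288; 168; 198; 152; 221; 226; 246; 194; 56; 282; 93; 41; 325; 187; 136; 87; 115; 131; 3; 178; 202; 46; 222; 232; 250; 323; 311; 101; 264; 272; 330; 181; 137; 161; 110; 75; 121; 10; 258; 50; 63; 230; 247; 315; 57; 279; 98; 44; 304; 186; 138; 157; 213; 77; 296; 163; 9; 149; 67; 237; 251; 316; 61; 102; 261; 276; 327; 34; 139; 160; 212; 134; 295; 174; 201; 14; 224; 235; 24; 319; 58; 106; 95; 39; 297; 183; 336; 156; 211; 130; 122; 176; 259; 47; 16; 229; 18; 189; 62; 103; 92; 278; 324; 27; 140; 82; 209; 133; 124; 169; 254; 144; 66; 13; 248; 193; 306; 107; 90; 270; 299; 180; 341; 155; 112; 129; 118; 162; 200; 150; 217; 242; 6; 322; 310; 287; 97; 271; 301; 29; 141; 83; 207; 74; 123; 164;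 204; 45; 219; 227; 23]; [:: 0; 0; 0; 0; 0; 0; 0; 0; 0; 0; 0; 0; 0; 0; 0; 0; 0; 0; 0; 0; 0; 0; 0; 0; 0; 0; 0; 0; 0; 0; 0; 0; 0; 0; 0; 0; 0; 0; 0; 0; 0; 0; 0; 0; 0; 0; 0; 0; 0; 0; 0; 0; 0; 0; 0; 0; 0; 0; 0; 0; 0; 0; 0; 0; 0; 0; 0; 0; 0; 0; 0; 0; 0; 0; 0; 0; 0; 0; 0; 0; 0; 0; 0; 0; 0; 0; 0; 0; 0; 0; 0; 0; 0; 0; 0; 0; 0; 0; 0; 0; 0; 0; 0; 0; 0; 0; 0; 0; 0; 0; 0; 0; 0; 0; 0; 0; 0; 0; 0; 0; 0; 0; 0; 0; 0; 0; 0; 0; 0; 0; 0; 0; 0; 0; 0; 0; 0; 0; 0; 0; 0; 0; 0; 0; 0; 0; 0; 0; 0; 0; 0; 0; 0; 0; 0; 0; 0; 0; 0; 0; 0; 0; 0; 0; 0; 0; 0; 0; 0; 0; 0; 0; 0; 0; 0; 0; 0; 0; 0; 0; 0; 0; 0; 0; 0; 0; 0; 0; 0; 0; 0; 0; 0; 0; 0; 0; 0; 0; 0; 0; 0; 0; 0; 0; 0; 0; 0; 0; 0; 0; 0; 0; 0; 0; 0; 0; 0; 0; 0; 0; 0; 0; 0; 0; 0; 0; 0; 0; 0; 0; 0; 0; 0; 0; 0; 0; 0; 0; 0; 0; 0; 0; 0; 0; 0; 0; 0; 0; 0; 0; 0; 0; 0; 0; 0; 0; 0; 0; 0; 0; 0;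 0; 0; 0; 0; 0; 0; 0; 0; 0; 0; 0; 0; 0; 0; 0; 0; 0; 0; 0; 0; 0; 0; 0; 0; 0; 0; 0; 0; 0; 0; 0; 0; 0; 0; 0; 0; 0; 0; 0; 0; 0; 0; 0; 0; 0; 0; 0; 0; 0; 0; 0; 0; 0; 0; 0; 0; 0; 0; 0; 0; 0; 0; 0; 0; 0; 0; 0; 0; 0; 0; 0; 0; 0; 0; 0; 0; 0; 0; 0; 0; 0]; [:: 0; 327; 302; 277; 246; 267; 192; 21; 126; 147; 204; 333; 213; 28; 105; 46; 135; 317; 81; 3; 235; 278; 162; 263; 191; 25; 159; 124; 97; 114; 226; 33; 107; 47; 223; 323; 184; 61; 13; 253; 166; 176; 190; 22; 154; 150; 200; 336; 210; 284; 100; 48; 216; 288; 180; 328; 299; 1; 249; 174; 64; 26; 160; 145; 91; 110; 227; 30; 314; 49; 218; 291; 82; 324; 240; 270; 9; 264; 68; 44; 158; 151; 98; 339; 207; 286; 106; 79; 221; 294; 83; 58; 238; 258; 165; 0; 189; 38; 134; 149; 96; 334; 228; 27; 310; 50; 140; 295; 84; 55; 297; 256; 250; 178; 7; 23; 128; 120; 92; 340; 232; 280; 104; 72; 224; 315; 85; 54; 300; 271; 245; 265; 65; 11; 157; 118; 203; 338; 229; 287; 313; 51; 142; 292; 185; 62; 303; 272; 164; 261; 197; 40; 17; 148; 201; 113; 233; 285; 312; 74; 219; 318; 86; 329; 304; 273; 168; 175; 196; 18; 130; 16; 93; 111; 215; 281; 309; 76; 136; 296; 187; 60; 237; 274; 170;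 172; 63; 24; 155; 125; 6; 337; 209; 35; 306; 77; 143; 321; 87; 331; 301; 255; 163; 171; 66; 41; 161; 146; 205; 12; 230; 29; 99; 78; 141; 316; 181; 56; 242; 275; 247; 179; 69; 43; 131; 152; 94; 115; 2; 282; 103; 52; 137; 322; 188; 325; 305; 260; 169; 266; 70; 37; 133; 123; 90; 335; 211; 8; 308; 53; 220; 320; 186; 332; 239; 276; 244; 177; 195; 42; 127; 122; 202; 341; 225; 31; 4; 80; 222; 289; 182; 330; 236; 257; 167; 268; 67; 19; 132; 121; 199; 112; 231; 283; 102; 14; 138; 293; 88; 326; 234; 254; 243; 173; 194; 39; 153; 119; 198; 109; 212; 279; 311; 45; 5; 319; 89; 59; 241; 252; 248; 262; 71; 20; 129; 144; 206; 108; 214; 32; 307; 73; 217; 10; 183; 57; 298; 259; 251; 269; 193; 36; 156; 117; 95; 116; 208; 34; 101; 75; 139; 290]; [:: 0; 276; 129; 302; 329; 145; 181; 285; 87; 64; 254; 33; 192; 247; 334; 215; 269; 49; 161; 11; 122; 300; 230; 148; 187; 280; 168; 136; 22; 93; 291; 245; 333; 211; 112; 45; 59; 316; 1; 206; 228; 313; 185; 286; 163; 63; 253; 32; 191; 77; 341; 214; 109; 223; 55; 277; 133; 7; 328; 314; 103; 284; 169; 68; 25; 90; 296; 243; 237; 210; 108; 216; 159; 272; 117; 304; 0; 151; 105; 173; 167; 71; 24; 31; 190; 79; 339; 38; 116; 218; 158; 322; 123; 199; 232; 4; 184; 178; 88; 66; 21; 30; 293; 250; 242; 209; 261; 221; 157;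 315; 130; 201; 326; 306; 16; 283; 89; 141; 18; 29; 290; 73; 335; 42; 114; 50; 155; 317; 127; 301; 332; 147; 100; 6; 166; 135; 258; 28; 288; 80; 239; 208; 264; 224; 62; 320; 126; 298; 229; 149; 182; 177; 2; 69; 252; 98; 295; 78; 236; 44; 110; 52; 153; 274; 134; 297; 226; 307; 188; 281; 81; 9; 20; 92; 195; 74; 234; 36; 267; 219; 58; 323; 118; 305; 225; 308; 106; 287; 164; 140; 3; 27; 189; 246; 241; 37; 262; 46; 160; 271; 132; 205; 233; 309; 99; 174; 170; 70; 257; 12; 289; 244; 338; 40; 268; 53; 61; 318; 119; 303; 324; 310; 101; 179; 82; 65; 23; 94; 15; 75; 336; 213; 266; 51; 60; 270; 128; 198; 231; 146; 104; 176; 83; 143; 19; 35; 194; 10; 235; 207; 113; 47; 57; 275; 120; 299; 327; 311; 180; 171; 84; 139; 260; 34; 294; 251; 13; 43; 111; 220; 54; 278; 124; 200; 227; 150; 107; 279; 85; 142; 256; 95; 292; 76; 340; 8; 265; 222; 156; 273; 121; 202; 330; 312; 183; 172; 162; 138; 259; 97; 197; 72; 240; 212; 17; 48; 154; 319; 125; 203; 325; 152; 102; 282; 86; 67; 255; 91; 193; 249; 238; 39; 115; 14; 56; 321; 131; 204; 331; 144; 186; 175; 165; 137; 26; 96; 196; 248; 337; 41; 263; 217]; [:: 0; 290; 139; 75; 101; 34; 208; 116; 95; 117; 156; 36; 193; 269; 251; 259; 298; 57; 183; 10; 217; 73; 307; 32; 214; 108; 206; 144; 129; 20; 71; 262; 248;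 252; 241; 59; 89; 319; 5; 45; 311; 279; 212; 109; 198; 119; 153; 39; 194; 173; 243; 254; 234; 326; 88; 293; 138; 14; 102; 283; 231; 112; 199; 121; 132; 19; 67; 268; 167; 257; 236; 330; 182; 289; 222; 80; 4; 31; 225; 341; 202; 122; 127; 42; 195; 177; 244; 276; 239; 332; 186; 320; 220; 53; 308; 8; 211; 335; 90; 123; 133; 37; 70; 266; 169; 260; 305; 325; 188; 322; 137; 52; 103; 282; 2; 115; 94; 152; 131; 43; 69; 179; 247; 275; 242; 56; 181; 316; 141; 78; 99; 29; 230; 12; 205; 146; 161; 41; 66; 171; 163; 255; 301; 331; 87; 321; 143; 77; 306; 35; 209; 337; 6; 125; 155; 24; 63; 172; 170; 274; 237; 60; 187; 296; 136; 76; 309; 281; 215; 111; 93; 16; 130; 18; 196; 175; 168; 273; 304; 329; 86; 318; 219; 74; 312; 285; 233; 113; 201; 148; 17; 40; 197; 261; 164; 272; 303; 62; 185; 292; 142; 51; 313; 287; 229; 338; 203; 118; 157; 11; 65; 265; 245; 271; 300; 54; 85; 315; 224; 72; 104; 280; 232; 340; 92; 120; 128; 23; 7; 178; 250; 256; 297; 55; 84; 295; 140; 50; 310; 27; 228; 334; 96; 149; 134; 38; 189; 0; 165; 258; 238; 58; 83; 294; 221; 79; 106; 286; 207; 339; 98; 151; 158; 44; 68; 264; 9; 270; 240; 324; 82; 291; 218; 49; 314; 30; 227; 110; 91; 145; 160; 26; 64; 174; 249; 1; 299; 328; 180; 288; 216; 48; 100; 284; 210; 336; 200; 150; 154; 22;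 190; 176; 166; 253; 13; 61; 184; 323; 223; 47; 107; 33; 226; 114; 97; 124; 159; 25; 191; 263; 162; 278; 235; 3; 81; 317; 135; 46; 105; 28; 213; 333; 204; 147; 126; 21; 192; 267; 246; 277; 302; 327]; [:: 0; 0; 0; 0; 0; 0; 0; 0; 0; 0; 0; 0; 0; 0; 0; 0; 0; 0; 0; 0; 0; 0; 0; 0; 0; 0; 0; 0; 0; 0; 0; 0; 0; 0; 0; 0; 0; 0; 0; 0; 0; 0; 0; 0; 0; 0; 0; 0; 0; 0; 0; 0; 0; 0; 0; 0; 0; 0; 0; 0; 0; 0; 0; 0; 0; 0; 0; 0; 0; 0; 0; 0; 0; 0; 0; 0; 0; 0; 0; 0; 0; 0; 0; 0; 0; 0; 0; 0; 0; 0; 0; 0; 0; 0; 0; 0; 0; 0; 0; 0; 0; 0; 0; 0; 0; 0; 0; 0; 0; 0; 0; 0; 0; 0; 0; 0; 0; 0; 0; 0; 0; 0; 0; 0; 0; 0; 0; 0; 0; 0; 0; 0; 0; 0; 0; 0; 0; 0; 0; 0; 0; 0; 0; 0; 0; 0; 0; 0; 0; 0; 0; 0; 0; 0; 0; 0; 0; 0; 0; 0; 0; 0; 0; 0; 0; 0; 0; 0; 0; 0; 0; 0; 0; 0; 0; 0; 0; 0; 0; 0; 0; 0; 0; 0; 0; 0; 0; 0; 0; 0; 0; 0; 0; 0; 0; 0; 0; 0; 0; 0; 0; 0; 0; 0; 0; 0; 0; 0; 0; 0; 0; 0; 0; 0; 0; 0; 0; 0; 0; 0; 0; 0; 0; 0;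 0; 0; 0; 0; 0; 0; 0; 0; 0; 0; 0; 0; 0; 0; 0; 0; 0; 0; 0; 0; 0; 0; 0; 0; 0; 0; 0; 0; 0; 0; 0; 0; 0; 0; 0; 0; 0; 0; 0; 0; 0; 0; 0; 0; 0; 0; 0; 0; 0; 0; 0; 0; 0; 0; 0; 0; 0; 0; 0; 0; 0; 0; 0; 0; 0; 0; 0; 0; 0; 0; 0; 0; 0; 0; 0; 0; 0; 0; 0; 0; 0; 0; 0; 0; 0; 0; 0; 0; 0; 0; 0; 0; 0; 0; 0; 0; 0; 0; 0; 0; 0; 0; 0; 0; 0; 0; 0; 0; 0; 0; 0; 0; 0; 0; 0; 0; 0; 0]].
Lemma good342 : goodb 340 L342 W342. Proof. vm_compute. reflexivity. Qed.

Theorem mainTheorem10 :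
  forall n : nat, n \in [:: 90; 126; 198; 234; 306; 342] ->
    exists Q : 'M['Z_n]_(n.+1, 4),
      is_DCA Q /\ DCA_normalized Q /\ DCA_P1 Q /\ DCA_P2 Q.
Proof.
move=> n; rewrite !inE.
case/orP=> [/eqP->|]; first exact: (gen_ex good90).
case/orP=> [/eqP->|]; first exact: (gen_ex good126).
case/orP=> [/eqP->|]; first exact: (gen_ex good198).
case/orP=> [/eqP->|]; first exact: (gen_ex good234).
case/orP=> [/eqP->|]; first exact: (gen_ex good306).
move/eqP->; exact: (gen_ex good342).
Qed.
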